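(* Let $\sigma > -2$ and $p < -1-\sigma$, and set \[ a = \frac{\sigma+2}{1-p} \in (0,1), \qquad c_a = \big(a(1-a)\big)^{1/(p-1)}, \qquad u_a(x) = c_a x^a . \] Then there exists a one-parameter family $\{u^\alpha\}_{\alpha>0}$ of positive functions in $C^2(0,+\infty)$, each solving \[ u''(x) + x^\sigma u(x)^p = 0 \quad \text{for } x>0, \] such that $\lim_{x\searrow 0} u^\alpha(x)/u_a(x) = 1$ for every $\alpha>0$, and such that whenever $\alpha_1 > \alpha_2 > 0$, \[ u^{\alpha_1}(x) > u^{\alpha_2}(x) > u_a(x) \quad \text{for all } x > 0 . \]
   Context: The function $u_a$ is itself a positive solution of the same equation on $(0,+\infty)$. *)

(* Defs.v *)
From Stdlib Require Import Reals.
From Coquelicot Require Import Coquelicot.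
Open Scope R_scope.

Definition C2_on_pos (u : R -> R) : Prop :=
  forall x, 0 < x ->
    ex_derive u x /\ ex_derive (Derive u) x /\ continuous (Derive_n u 2) x.

Definition exp_a (sigma p : R) : R := (sigma + 2) / (1 - p).

Definition c_a (sigma p : R) : R :=
  let a := exp_a sigma p in Rpower (a * (1 - a)) (1 / (p - 1)).

Definition u_a (sigma p : R) (x : R) : R :=
  c_a sigma p * Rpower x (exp_a sigma p).

(* Main.v *)
Require Import Defs.
From Stdlib Require Import Reals.
From Coquelicot Require Import Coquelicot.
From Stdlib Require Import Lra Lia Classical.
Open Scope R_scope.

Ltac cdv := apply (ex_derive_continuous (K:=R_AbsRing) (V:=R_NormedModule)); auto_derive; auto.

Definition cont (g : R -> R) := forall s, continuous g s.
Definition ebound (g : R -> R) (M γ : R) := forall s, s <= 0 -> Rabs (g s) <= M * exp (γ * s).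

Lemma cont_exRInt g a b : cont g -> ex_RInt g a b.
Proof. intros H; apply (ex_RInt_continuous (V:=R_CompleteNormedModule)); intros; apply H. Qed.

Lemma RInt_expg (M γ a b : R) : γ <> 0 ->
  RInt (fun s => M * exp (γ * s)) a b = M * (exp (γ * b) - exp (γ * a)) / γ.
Proof.
  intros Hg.
  apply is_RInt_unique.
  replace (M * (exp (γ * b) - exp (γ * a)) / γ) with
     (minus ((fun s => M * exp (γ * s) / γ) b) ((fun s => M * exp (γ * s) / γ) a)).
  2:{ unfold minus, plus, opp; simpl; field; auto. }
  apply (is_RInt_derive (V:=R_CompleteNormedModule) (fun s => M * exp (γ * s) / γ)).
  - intros x _. auto_derive; auto. field; auto.
  - intros x _. cdv.
Qed.

Lemma RInt_abs_bound g M γ a b : cont g -> (forall s, a <= s <= b -> Rabs (g s) <= M * exp (γ * s)) -> 0 <= M -> 0 < γ -> a <= b ->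
  Rabs (RInt g a b) <= M * exp (γ * b) / γ.
Proof.
  intros Hc Hb HM Hg Hab.
  eapply Rle_trans. apply abs_RInt_le; auto. apply cont_exRInt; auto.
  eapply Rle_trans. apply RInt_le with (g := fun s => M * exp (γ * s)).
  auto.
  apply (ex_RInt_continuous (V:=R_CompleteNormedModule)); intros; apply continuous_Rabs_comp; apply Hc.
  apply cont_exRInt. intro s. cdv.
  intros x Hx; apply Hb; lra.
  rewrite RInt_expg by lra.
  pose proof (exp_pos (γ * a)). unfold Rdiv.
  apply Rmult_le_compat_r. left; apply Rinv_0_lt_compat; auto. nra.
Qed.

Lemma RInt_abs_bound2 g M γ a b X : cont g -> ebound g M γ -> 0 < γ -> a <= X -> b <= X -> X <= 0 ->
  Rabs (RInt g a b) <= M * exp (γ * X) / γ.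
Proof.
  intros Hc Hb Hg Ha Hb' HX.
  assert (0 <= M). { specialize (Hb 0 (Rle_refl 0)). pose proof (Rabs_pos (g 0)). pose proof (exp_pos (γ*0)). nra. }
  assert (HH: forall y, y <= X -> M * exp (γ * y) / γ <= M * exp (γ * X) / γ).
  { intros y Hy. unfold Rdiv. apply Rmult_le_compat_r. left; apply Rinv_0_lt_compat; auto.
    apply Rmult_le_compat_l; auto. destruct (Req_dec y X). subst; lra. left; apply exp_increasing; nra. }
  destruct (Rle_dec a b).
  - eapply Rle_trans. apply RInt_abs_bound; eauto. intros s Hs; apply Hb; lra. apply HH; auto.
  - rewrite <- (opp_RInt_swap g) by (apply cont_exRInt; auto). unfold opp; simpl. rewrite Rabs_Ropp.
    eapply Rle_trans. apply RInt_abs_bound; eauto. intros s Hs; apply Hb; lra. lra. apply HH; auto.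
Qed.

Lemma exp_small (γ e : R) : 0 < γ -> 0 < e -> exists N : nat, forall n, (N <= n)%nat -> exp (- γ * INR n) < e.
Proof.
  intros Hg He.
  destruct (INR_unbounded (/ (γ * e))) as [N HN].
  exists N; intros n Hn.
  assert (HnN: INR N <= INR n) by (apply le_INR; auto).
  pose proof (exp_ineq1_le (γ * INR n)).
  assert (0 < exp (γ * INR n)) by apply exp_pos.
  replace (- γ * INR n) with (- (γ * INR n)) by ring. rewrite exp_Ropp.
  assert (γ * INR n > / e).
  { assert (γ * INR N > / e).
    { apply Rmult_gt_compat_l with (r := γ) in HN; auto.
      replace (γ * / (γ * e)) with (/ e) in HN. lra. field; lra. }
    nra. }
  rewrite <- (Rinv_inv e). apply Rinv_lt_contravar.
  apply Rmult_lt_0_compat; auto. apply Rinv_0_lt_compat; auto. lra.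
Qed.

Lemma Ig_cauchy g M γ : cont g -> ebound g M γ -> 0 < γ ->
  ex_finite_lim_seq (fun n => RInt g (- INR n) 0).
Proof.
  intros Hc Hb Hg. apply ex_lim_seq_cauchy_corr. intros eps.
  assert (0 <= M). { specialize (Hb 0 (Rle_refl 0)). pose proof (Rabs_pos (g 0)). pose proof (exp_pos (γ*0)). nra. }
  destruct (exp_small γ (eps * γ / (M + 1)) Hg) as [N HN].
  { apply Rdiv_lt_0_compat. apply Rmult_lt_0_compat. apply cond_pos. auto. lra. }
  exists N. intros n m Hn Hm.
  replace (RInt g (- INR n) 0 - RInt g (- INR m) 0) with (RInt g (- INR n) (- INR m)).
  2:{ assert (E: RInt g (- INR n) (- INR m) + RInt g (- INR m) 0 = RInt g (- INR n) 0).
      { apply (RInt_Chasles (V:=R_CompleteNormedModule)); apply cont_exRInt; auto. }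
      lra. }
  eapply Rle_lt_trans. apply RInt_abs_bound2 with (X := - INR N); eauto.
  apply Ropp_le_contravar, le_INR; auto. apply Ropp_le_contravar, le_INR; auto.
  pose proof (pos_INR N); lra.
  specialize (HN N (le_n N)).
  replace (γ * - INR N) with (- γ * INR N) by ring.
  assert (M * exp (- γ * INR N) <= (M+1) * exp (- γ * INR N)).
  { pose proof (exp_pos (- γ * INR N)). nra. }
  apply Rle_lt_trans with ((M+1) * exp (- γ * INR N) / γ).
  unfold Rdiv; apply Rmult_le_compat_r; auto. left; apply Rinv_0_lt_compat; auto.
  apply Rmult_lt_compat_r with (r := (M+1)/γ) in HN.
  2:{ apply Rdiv_lt_0_compat; lra. }
  replace (eps * γ / (M + 1) * ((M + 1) / γ)) with (pos eps) in HN by (field; lra).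
  replace ((M + 1) * exp (- γ * INR N) / γ) with (exp (- γ * INR N) * ((M + 1) / γ)) by (field; lra).
  auto.
Qed.

Definition Ig (g : R -> R) (t : R) : R := Lim_seq (fun n => RInt g (- INR n) 0) + RInt g 0 t.

Lemma Ig_lim g M γ t : cont g -> ebound g M γ -> 0 < γ ->
  is_lim_seq (fun n => RInt g (- INR n) t) (Ig g t).
Proof.
  intros Hc Hb Hg. unfold Ig.
  apply is_lim_seq_ext with (fun n => RInt g (- INR n) 0 + RInt g 0 t).
  { intros n. rewrite <- (RInt_Chasles g (- INR n) 0 t) by (apply cont_exRInt; auto). reflexivity. }
  apply is_lim_seq_plus'. apply Lim_seq_correct'. eapply Ig_cauchy; eauto.
  apply is_lim_seq_const.
Qed.

Lemma Ig_derive g t : cont g -> is_derive (Ig g) t (g t).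
Proof.
  intros Hc. unfold Ig.
  set (C := real (Lim_seq (fun n => RInt g (- INR n) 0))).
  assert (H1: is_derive (fun _ : R => C) t 0) by apply (is_derive_const (K:=R_AbsRing) (V:=R_NormedModule)).
  assert (H2: is_derive (fun u => RInt g 0 u) t (g t)).
  { apply (is_derive_RInt (V:=R_CompleteNormedModule)) with (a := 0).
    apply filter_forall. intros; apply (RInt_correct (V:=R_CompleteNormedModule)), cont_exRInt; auto.
    apply Hc. }
  pose proof (is_derive_plus _ _ _ _ _ H1 H2) as H. simpl in H.
  replace (g t) with (plus 0 (g t)). exact H. unfold plus; simpl; ring.
Qed.

Lemma Ig_unique g M γ t (l : R) : cont g -> ebound g M γ -> 0 < γ ->
  is_lim_seq (fun n => RInt g (- INR n) t) l -> Ig g t = l.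
Proof.
  intros Hc Hb Hg Hl. pose proof (Ig_lim g M γ t Hc Hb Hg).
  pose proof (is_lim_seq_unique _ _ Hl). pose proof (is_lim_seq_unique _ _ H).
  assert (E: Finite (Ig g t) = Finite l) by congruence. now inversion E.
Qed.

Lemma Ig_expg M γ t : 0 < γ -> Ig (fun s => M * exp (γ * s)) t = M * exp (γ * t) / γ.
Proof.
  intros Hg.
  assert (Hc : cont (fun s => M * exp (γ * s))).
  { intro s. cdv. }
  apply Ig_unique with (Rabs M) γ; auto.
  { intros s _. rewrite Rabs_mult, (Rabs_pos_eq (exp _)). lra. left; apply exp_pos. }
  apply is_lim_seq_ext with (fun n => M * exp (γ * t) / γ - M / γ * exp (- γ * INR n)).
  { intros n. rewrite RInt_expg by lra. replace (γ * - INR n) with (- γ * INR n) by ring. field. lra. }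
  assert (HL: is_lim_seq (fun n => exp (- γ * INR n)) 0).
  2:{ pose proof (is_lim_seq_scal_l _ (M / γ) 0 HL) as HL2. simpl in HL2. rewrite Rmult_0_r in HL2.
      pose proof (is_lim_seq_minus' _ _ _ _ (is_lim_seq_const (M * exp (γ * t) / γ)) HL2) as HL3.
      rewrite Rminus_0_r in HL3. exact HL3. }
  apply is_lim_seq_ext with (fun n => (exp (- γ)) ^ n).
  { intros n. rewrite <- (Rpower_pow n (exp (- γ))) by apply exp_pos.
    unfold Rpower. rewrite ln_exp. f_equal; ring. }
  apply is_lim_seq_geom. rewrite Rabs_pos_eq by (left; apply exp_pos).
  rewrite <- exp_0. apply exp_increasing. lra.
Qed.

Lemma Ig_le g h Mg γg Mh γh t : cont g -> ebound g Mg γg -> 0 < γg ->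
  cont h -> ebound h Mh γh -> 0 < γh ->
  (forall s, s <= t -> Rabs (g s) <= h s) -> Rabs (Ig g t) <= Ig h t.
Proof.
  intros Hc Hb Hg Hc' Hb' Hg' Hle.
  pose proof (is_lim_seq_abs _ _ (Ig_lim g Mg γg t Hc Hb Hg)) as L1.
  pose proof (Ig_lim h Mh γh t Hc' Hb' Hg') as L2.
  refine (is_lim_seq_le_loc _ _ _ _ _ L1 L2).
  destruct (INR_unbounded (- t)) as [N HN]. exists N. intros n Hn.
  assert (INR N <= INR n) by (apply le_INR; auto).
  eapply Rle_trans. apply abs_RInt_le. lra. apply cont_exRInt; auto.
  apply RInt_le. lra. apply (ex_RInt_continuous (V:=R_CompleteNormedModule)); intros; apply continuous_Rabs_comp; apply Hc.
  apply cont_exRInt; auto. intros x Hx. apply Hle. lra.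
Qed.

Lemma RInt_minus_R g h a b : cont g -> cont h ->
  RInt (fun s => g s - h s) a b = RInt g a b - RInt h a b.
Proof. intros; apply (RInt_minus (V:=R_CompleteNormedModule)); apply cont_exRInt; auto. Qed.

Lemma Ig_minus g h Mg γg Mh γh t : cont g -> ebound g Mg γg -> 0 < γg ->
  cont h -> ebound h Mh γh -> 0 < γh ->
  Ig (fun s => g s - h s) t = Ig g t - Ig h t.
Proof.
  intros Hc Hb Hg Hc' Hb' Hg'.
  assert (Hc2 : cont (fun s => g s - h s)).
  { intro s. apply (continuous_minus (V:=R_NormedModule)); auto. }
  pose (γ := Rmin γg γh).
  assert (Hgp : 0 < γ) by (unfold γ; apply Rmin_glb_lt; auto).
  unfold Ig.
  rewrite (RInt_minus_R g h 0 t) by auto.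
  rewrite (Lim_seq_ext (fun n => RInt (fun s => g s - h s) (- INR n) 0)
            (fun n => RInt g (- INR n) 0 - RInt h (- INR n) 0)).
  2:{ intros n. rewrite (RInt_minus_R g h) by auto. reflexivity. }
  rewrite Lim_seq_minus.
  2: apply ex_finite_lim_seq_correct; eapply Ig_cauchy with (M:=Mg); eauto.
  2: apply ex_finite_lim_seq_correct; eapply Ig_cauchy with (M:=Mh); eauto.
  2:{ destruct (Ig_cauchy g Mg γg Hc Hb Hg) as [l1 H1]. destruct (Ig_cauchy h Mh γh Hc' Hb' Hg') as [l2 H2].
      rewrite (is_lim_seq_unique _ _ H1), (is_lim_seq_unique _ _ H2). simpl. auto. }
  destruct (Ig_cauchy g Mg γg Hc Hb Hg) as [l1 H1]. destruct (Ig_cauchy h Mh γh Hc' Hb' Hg') as [l2 H2].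
  rewrite (is_lim_seq_unique _ _ H1), (is_lim_seq_unique _ _ H2). simpl. ring.
Qed.

Lemma Ig_ext g1 g2 t : (forall s, g1 s = g2 s) -> Ig g1 t = Ig g2 t.
Proof.
  intros H. unfold Ig. rewrite (Lim_seq_ext _ (fun n => RInt g2 (- INR n) 0)).
  rewrite (RInt_ext g1 g2). auto. intros; auto.
  intros n. apply RInt_ext. intros; auto.
Qed.

Lemma ebound_expg M γ : ebound (fun s => M * exp (γ * s)) (Rabs M) γ.
Proof. intros s _. rewrite Rabs_mult, (Rabs_pos_eq (exp _)) by (left; apply exp_pos). lra. Qed.
Lemma cont_expg M γ : cont (fun s => M * exp (γ * s)).
Proof. intro s; cdv. Qed.

Lemma Ig_expg2 M1 γ1 M2 γ2 t : 0 < γ1 -> 0 < γ2 ->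
  Ig (fun s => M1 * exp (γ1 * s) + M2 * exp (γ2 * s)) t = M1 * exp (γ1 * t) / γ1 + M2 * exp (γ2 * t) / γ2.
Proof.
  intros H1 H2.
  rewrite (Ig_ext _ (fun s => M1 * exp (γ1 * s) - (- M2) * exp (γ2 * s))) by (intros; ring).
  rewrite (Ig_minus _ _ (Rabs M1) γ1 (Rabs (- M2)) γ2) by (auto using ebound_expg, cont_expg).
  rewrite !Ig_expg by auto. field; lra.
Qed.


Lemma cont_mult_exp k f : cont f -> cont (fun s => exp (k * s) * f s).
Proof.
  intros H s. apply (continuous_mult (K:=R_AbsRing)). cdv. apply H.
Qed.

Definition gA lam f := fun s => exp (- lam * s) * f s.
Definition gB lm f := fun s => exp (- lm * s) * f s.

Definition Q lam lm f t :=
  (exp (lam * t) * Ig (gA lam f) t - exp (lm * t) * Ig (gB lm f) t) / (lam - lm).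
Definition Q1 lam lm f t :=
  (exp (lam * t) * (lam * Ig (gA lam f) t) - exp (lm * t) * (lm * Ig (gB lm f) t)) / (lam - lm).
Definition Q2 lam lm f t :=
  (exp (lam * t) * (lam * (lam * Ig (gA lam f) t)) - exp (lm * t) * (lm * (lm * Ig (gB lm f) t))) / (lam - lm) + f t.

Lemma isd_comb (A B : R -> R) a' b' t k1 k2 D :
  is_derive A t a' -> is_derive B t b' -> D <> 0 ->
  is_derive (fun t => (exp (k1 * t) * A t - exp (k2 * t) * B t) / D) t
    ((k1 * exp (k1 * t) * A t + exp (k1 * t) * a' - (k2 * exp (k2 * t) * B t + exp (k2 * t) * b')) / D).
Proof.
  intros HA HB HD.
  assert (eA: ex_derive A t) by (exists a'; auto).
  assert (eB: ex_derive B t) by (exists b'; auto).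
  rewrite <- (is_derive_unique _ _ _ HA), <- (is_derive_unique _ _ _ HB).
  auto_derive. auto. change (fun x : R => A x) with A. change (fun x : R => B x) with B. unfold Rdiv. ring.
Qed.

Lemma isd_scal (A : R -> R) a' t k : is_derive A t a' -> is_derive (fun t => k * A t) t (k * a').
Proof.
  intros HA. assert (eA: ex_derive A t) by (exists a'; auto).
  rewrite <- (is_derive_unique _ _ _ HA). auto_derive. auto. change (fun x : R => A x) with A. ring.
Qed.

Lemma exp_cancel k t x : exp (k * t) * (exp (- k * t) * x) = x.
Proof. rewrite <- Rmult_assoc, <- exp_plus. replace (k * t + - k * t) with 0 by ring. rewrite exp_0; ring. Qed.



Lemma cont_gA lam f : cont f -> cont (gA lam f).
Proof. intros; unfold gA; apply cont_mult_exp; auto. Qed.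
Lemma cont_gB lm f : cont f -> cont (gB lm f).
Proof. intros; unfold gB; apply cont_mult_exp; auto. Qed.

Lemma Q_deriv lam lm f t : cont f -> lm < lam ->
  is_derive (Q lam lm f) t (Q1 lam lm f t).
Proof.
  intros Hc Hl. unfold Q, Q1.
  replace ((exp (lam * t) * (lam * Ig (gA lam f) t) - exp (lm * t) * (lm * Ig (gB lm f) t)) / (lam - lm))
   with ((lam * exp (lam * t) * Ig (gA lam f) t + exp (lam * t) * gA lam f t
           - (lm * exp (lm * t) * Ig (gB lm f) t + exp (lm * t) * gB lm f t)) / (lam - lm)).
  apply isd_comb. apply Ig_derive, cont_gA; auto. apply Ig_derive, cont_gB; auto. lra.
  unfold gA, gB. rewrite !exp_cancel. field. lra.
Qed.

Lemma Q1_deriv lam lm f t : cont f -> lm < lam ->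
  is_derive (Q1 lam lm f) t (Q2 lam lm f t).
Proof.
  intros Hc Hl. unfold Q1, Q2.
  replace ((exp (lam * t) * (lam * (lam * Ig (gA lam f) t)) - exp (lm * t) * (lm * (lm * Ig (gB lm f) t))) / (lam - lm) + f t)
   with ((lam * exp (lam * t) * (lam * Ig (gA lam f) t) + exp (lam * t) * (lam * gA lam f t)
           - (lm * exp (lm * t) * (lm * Ig (gB lm f) t) + exp (lm * t) * (lm * gB lm f t))) / (lam - lm)).
  apply isd_comb with (A := fun t => lam * Ig (gA lam f) t) (B := fun t => lm * Ig (gB lm f) t).
  apply isd_scal, Ig_derive, cont_gA; auto. apply isd_scal, Ig_derive, cont_gB; auto. lra.
  unfold gA, gB.
  replace (exp (lam * t) * (lam * (exp (- lam * t) * f t))) with (lam * (exp (lam * t) * (exp (- lam * t) * f t))) by ring.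
  replace (exp (lm * t) * (lm * (exp (- lm * t) * f t))) with (lm * (exp (lm * t) * (exp (- lm * t) * f t))) by ring.
  rewrite !exp_cancel. field. lra.
Qed.

Lemma Q_ode lam lm k mu f t : lam * lam + k * lam - mu = 0 -> lm * lm + k * lm - mu = 0 -> lm < lam ->
  Q2 lam lm f t = - k * Q1 lam lm f t + mu * Q lam lm f t + f t.
Proof.
  intros H1 H2 Hl. unfold Q, Q1, Q2.
  replace (lam * (lam * Ig (gA lam f) t)) with ((lam * lam) * Ig (gA lam f) t) by ring.
  replace (lm * (lm * Ig (gB lm f) t)) with ((lm * lm) * Ig (gB lm f) t) by ring.
  replace (lam * lam) with (mu - k * lam) by lra.
  replace (lm * lm) with (mu - k * lm) by lra.
  field. lra.
Qed.

Lemma RInt_scal_R g c a b : cont g -> RInt (fun s => c * g s) a b = c * RInt g a b.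
Proof. intros. apply (RInt_scal (V:=R_CompleteNormedModule)). apply cont_exRInt; auto. Qed.

Definition Kf lam lm f t := fun s => (exp (lam * (t - s)) - exp (lm * (t - s))) * f s.

Lemma cont_Kf lam lm f t : cont f -> cont (Kf lam lm f t).
Proof. intros H s. unfold Kf. apply (continuous_mult (K:=R_AbsRing)). cdv. apply H. Qed.

Definition eb2 lam β f M1 M2 := forall s, Rabs (f s) <= M1 * exp (2 * lam * s) + M2 * exp (β * s).

Lemma exp_le_mono a b : a <= b -> exp a <= exp b.
Proof. intros H. destruct (Req_dec a b). subst; lra. left; apply exp_increasing; lra. Qed.

Lemma ebound_gA lam β f M1 M2 : 0 < lam -> 2 * lam <= β -> 0 <= M2 ->
  eb2 lam β f M1 M2 -> ebound (gA lam f) (M1 + M2) lam.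
Proof.
  intros Hl Hb HM H s Hs. unfold gA. rewrite Rabs_mult, Rabs_pos_eq by (left; apply exp_pos).
  specialize (H s). pose proof (exp_pos (- lam * s)).
  assert (E1: exp (- lam * s) * exp (2 * lam * s) = exp (lam * s)) by (rewrite <- exp_plus; f_equal; ring).
  assert (E2: exp (- lam * s) * exp (β * s) = exp ((β - lam) * s)) by (rewrite <- exp_plus; f_equal; ring).
  assert (exp ((β - lam) * s) <= exp (lam * s)) by (apply exp_le_mono; nra).
  apply Rle_trans with (exp (- lam * s) * (M1 * exp (2 * lam * s) + M2 * exp (β * s))).
  apply Rmult_le_compat_l; lra.
  replace (exp (- lam * s) * (M1 * exp (2 * lam * s) + M2 * exp (β * s))) with
    (M1 * (exp (- lam * s) * exp (2 * lam * s)) + M2 * (exp (- lam * s) * exp (β * s))) by ring.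
  rewrite E1, E2. nra.
Qed.

Lemma ebound_gB lam lm β f M1 M2 : 0 < lam -> 2 * lam <= β -> 0 <= M2 ->
  eb2 lam β f M1 M2 -> ebound (gB lm f) (M1 + M2) (2 * lam - lm).
Proof.
  intros Hl Hb HM H s Hs. unfold gB. rewrite Rabs_mult, Rabs_pos_eq by (left; apply exp_pos).
  specialize (H s). pose proof (exp_pos (- lm * s)).
  assert (E1: exp (- lm * s) * exp (2 * lam * s) = exp ((2 * lam - lm) * s)) by (rewrite <- exp_plus; f_equal; ring).
  assert (E2: exp (- lm * s) * exp (β * s) = exp ((β - lm) * s)) by (rewrite <- exp_plus; f_equal; ring).
  assert (exp ((β - lm) * s) <= exp ((2 * lam - lm) * s)) by (apply exp_le_mono; nra).
  apply Rle_trans with (exp (- lm * s) * (M1 * exp (2 * lam * s) + M2 * exp (β * s))).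
  apply Rmult_le_compat_l; lra.
  replace (exp (- lm * s) * (M1 * exp (2 * lam * s) + M2 * exp (β * s))) with
    (M1 * (exp (- lm * s) * exp (2 * lam * s)) + M2 * (exp (- lm * s) * exp (β * s))) by ring.
  rewrite E1, E2. nra.
Qed.

Lemma Q_lim lam lm β f M1 M2 t : cont f -> eb2 lam β f M1 M2 -> 0 < lam -> lm < 0 -> 2 * lam <= β -> 0 <= M2 ->
  is_lim_seq (fun n => RInt (Kf lam lm f t) (- INR n) t / (lam - lm)) (Q lam lm f t).
Proof.
  intros Hc Hb Hl Hm Hβ HM.
  apply is_lim_seq_ext with
    (fun n => (exp (lam * t) * RInt (gA lam f) (- INR n) t - exp (lm * t) * RInt (gB lm f) (- INR n) t) / (lam - lm)).
  { intros n. f_equal.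
    rewrite <- (RInt_scal_R (gA lam f)), <- (RInt_scal_R (gB lm f)) by (try apply cont_gA; try apply cont_gB; auto).
    rewrite <- RInt_minus_R.
    2,3: intro s; apply (continuous_mult (K:=R_AbsRing)); [cdv | try apply cont_gA; try apply cont_gB; auto].
    apply RInt_ext. intros x _. unfold Kf, gA, gB.
    assert (E1: exp (lam * (t - x)) = exp (lam * t) * exp (- lam * x)) by (rewrite <- exp_plus; f_equal; ring).
    assert (E2: exp (lm * (t - x)) = exp (lm * t) * exp (- lm * x)) by (rewrite <- exp_plus; f_equal; ring).
    rewrite E1, E2. match goal with |- ?a = ?b => change (@eq R a b) end. ring. }
  pose proof (Ig_lim _ _ _ t (cont_gA lam f Hc) (ebound_gA lam β f M1 M2 Hl Hβ HM Hb) Hl) as LA.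
  assert (Hg2: 0 < 2 * lam - lm) by lra.
  pose proof (Ig_lim _ _ _ t (cont_gB lm f Hc) (ebound_gB lam lm β f M1 M2 Hl Hβ HM Hb) Hg2) as LB.
  pose proof (is_lim_seq_scal_l _ (exp (lam * t)) _ LA) as LA'.
  pose proof (is_lim_seq_scal_l _ (exp (lm * t)) _ LB) as LB'.
  simpl in LA', LB'.
  pose proof (is_lim_seq_minus' _ _ _ _ LA' LB') as L3.
  pose proof (is_lim_seq_scal_r _ (/ (lam - lm)) _ L3) as L4. simpl in L4.
  unfold Q, Rdiv. exact L4.
Qed.

Lemma Q_le lam lm β f g Mf1 Mf2 Mg1 Mg2 t : cont f -> eb2 lam β f Mf1 Mf2 -> cont g -> eb2 lam β g Mg1 Mg2 ->
  0 < lam -> lm < 0 -> 2 * lam <= β -> 0 <= Mf2 -> 0 <= Mg2 -> (forall s, Rabs (f s) <= g s) ->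
  Rabs (Q lam lm f t) <= Q lam lm g t.
Proof.
  intros Hc Hb Hc' Hb' Hl Hm Hβ HM1 HM2 Hle.
  pose proof (is_lim_seq_abs _ _ (Q_lim lam lm β f Mf1 Mf2 t Hc Hb Hl Hm Hβ HM1)) as L1.
  pose proof (Q_lim lam lm β g Mg1 Mg2 t Hc' Hb' Hl Hm Hβ HM2) as L2.
  refine (is_lim_seq_le_loc _ _ _ _ _ L1 L2).
  destruct (INR_unbounded (- t)) as [N HN]. exists N. intros n Hn.
  assert (INR N <= INR n) by (apply le_INR; auto).
  unfold Rdiv. rewrite Rabs_mult, (Rabs_pos_eq (/ _)) by (left; apply Rinv_0_lt_compat; lra).
  apply Rmult_le_compat_r. left; apply Rinv_0_lt_compat; lra.
  eapply Rle_trans. apply abs_RInt_le. lra. apply cont_exRInt, cont_Kf; auto.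
  apply RInt_le. lra. apply (ex_RInt_continuous (V:=R_CompleteNormedModule)); intros; apply continuous_Rabs_comp; apply cont_Kf; auto.
  apply cont_exRInt, cont_Kf; auto. intros x Hx. unfold Kf.
  rewrite Rabs_mult. assert (exp (lm * (t - x)) <= exp (lam * (t - x))).
  { apply exp_le_mono. nra. }
  rewrite Rabs_pos_eq by lra. apply Rmult_le_compat_l. lra. apply Hle.
Qed.

Lemma Q_minus lam lm β f g Mf1 Mf2 Mg1 Mg2 t : cont f -> eb2 lam β f Mf1 Mf2 -> cont g -> eb2 lam β g Mg1 Mg2 ->
  0 < lam -> lm < 0 -> 2 * lam <= β -> 0 <= Mf2 -> 0 <= Mg2 ->
  Q lam lm (fun s => f s - g s) t = Q lam lm f t - Q lam lm g t.
Proof.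
  intros Hc Hb Hc' Hb' Hl Hm Hβ HM1 HM2. unfold Q.
  rewrite (Ig_ext (gA lam (fun s => f s - g s)) (fun s => gA lam f s - gA lam g s)).
  2: intros; unfold gA; ring.
  rewrite (Ig_ext (gB lm (fun s => f s - g s)) (fun s => gB lm f s - gB lm g s)).
  2: intros; unfold gB; ring.
  rewrite (Ig_minus _ _ (Mf1 + Mf2) lam (Mg1 + Mg2) lam) by (try apply cont_gA; try eapply ebound_gA; eauto).
  rewrite (Ig_minus _ _ (Mf1 + Mf2) (2*lam - lm) (Mg1 + Mg2) (2*lam-lm)) by (try apply cont_gB; try eapply ebound_gB; eauto; lra).
  field. lra.
Qed.

Lemma eb2_expg lam β M γ : 0 < lam -> 2 * lam <= β -> (γ = 2 * lam \/ γ = β) ->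
  eb2 lam β (fun s => M * exp (γ * s)) (Rabs M) (Rabs M).
Proof.
  intros Hl Hb Hg s. rewrite Rabs_mult, (Rabs_pos_eq (exp _)) by (left; apply exp_pos).
  pose proof (exp_pos (2 * lam * s)); pose proof (exp_pos (β * s)); pose proof (Rabs_pos M).
  destruct Hg; subst; nra.
Qed.

Lemma Q_expg lam lm M γ t : 0 < lam -> lm < 0 -> lam < γ ->
  Q lam lm (fun s => M * exp (γ * s)) t = M * exp (γ * t) / ((γ - lam) * (γ - lm)).
Proof.
  intros Hl Hm Hg. unfold Q.
  rewrite (Ig_ext _ (fun s => M * exp ((γ - lam) * s))).
  2:{ intros s. unfold gA. replace ((γ - lam) * s) with (- lam * s + γ * s) by ring. rewrite exp_plus. ring. }
  rewrite (Ig_ext (gB lm _) (fun s => M * exp ((γ - lm) * s))).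
  2:{ intros s. unfold gB. replace ((γ - lm) * s) with (- lm * s + γ * s) by ring. rewrite exp_plus. ring. }
  rewrite !Ig_expg by lra.
  replace (exp (lam * t) * (M * exp ((γ - lam) * t) / (γ - lam))) with (M * (exp (lam * t + (γ - lam) * t)) / (γ - lam))
    by (rewrite exp_plus; field; lra).
  replace (exp (lm * t) * (M * exp ((γ - lm) * t) / (γ - lm))) with (M * (exp (lm * t + (γ - lm) * t)) / (γ - lm))
    by (rewrite exp_plus; field; lra).
  replace (lam * t + (γ - lam) * t) with (γ * t) by ring.
  replace (lm * t + (γ - lm) * t) with (γ * t) by ring.
  field. lra.
Qed.

Lemma Q_bound lam lm β f M1 M2 t : cont f -> eb2 lam β f M1 M2 -> 0 < lam -> lm < 0 -> 2 * lam <= β ->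
  0 <= M1 -> 0 <= M2 ->
  Rabs (Q lam lm f t) <= M1 * exp (2 * lam * t) / (lam * (2 * lam - lm)) + M2 * exp (β * t) / ((β - lam) * (β - lm)).
Proof.
  intros Hc Hb Hl Hm Hβ H1 H2.
  replace (lam * (2 * lam - lm)) with ((2 * lam - lam) * (2 * lam - lm)) by ring.
  rewrite <- (Q_expg lam lm M1 (2 * lam)), <- (Q_expg lam lm M2 β) by lra.
  replace (Q lam lm (fun s => M2 * exp (β * s)) t) with (- Q lam lm (fun s => - M2 * exp (β * s)) t).
  2:{ rewrite !Q_expg by lra. field. split; lra. }
  match goal with |- _ <= ?a + - ?b => change (a + - b) with (a - b) end.
  rewrite <- Q_minus with (β := β) (Mf1 := Rabs M1) (Mf2 := Rabs M1) (Mg1 := Rabs (- M2)) (Mg2 := Rabs (- M2)); try lra;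
    try apply Rabs_pos; try apply cont_expg; try (apply eb2_expg; lra).
  apply Q_le with (β := β) (Mf1 := M1) (Mf2 := M2) (Mg1 := Rabs M1 + Rabs (-M2)) (Mg2 := Rabs M1 + Rabs (- M2)); auto; try lra.
  intro s; apply (continuous_minus (V:=R_NormedModule)); apply cont_expg.
  intro s. eapply Rle_trans. apply Rabs_triang. rewrite Rabs_Ropp.
  rewrite !Rabs_mult, !(Rabs_pos_eq (exp _)) by (left; apply exp_pos).
  pose proof (exp_pos (2 * lam * s)); pose proof (exp_pos (β * s)); pose proof (Rabs_pos M1); pose proof (Rabs_pos (- M2)).
  nra.
  pose proof (Rabs_pos M1); pose proof (Rabs_pos (- M2)); lra.
  intro s. specialize (Hb s). lra.
Qed.

Lemma Q1_bound lam lm β f M1 M2 t : cont f -> eb2 lam β f M1 M2 -> 0 < lam -> lm < 0 -> 2 * lam <= β ->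
  0 <= M1 -> 0 <= M2 -> t <= 0 ->
  Rabs (Q1 lam lm f t) <= (M1 + M2) * exp (2 * lam * t) * (1 + (- lm) / (2 * lam - lm)) / (lam - lm).
Proof.
  intros Hc Hb Hl Hm Hβ HM1 HM2 Ht. set (M := M1 + M2).
  assert (HA: Rabs (Ig (gA lam f) t) <= M * exp (lam * t) / lam).
  { rewrite <- Ig_expg by auto. apply Ig_le with M lam (Rabs M) lam; auto.
    apply cont_gA; auto. eapply ebound_gA; eauto. apply cont_expg. apply ebound_expg.
    intros s Hs. apply (ebound_gA lam β f M1 M2); auto. lra. }
  assert (HB: Rabs (Ig (gB lm f) t) <= M * exp ((2 * lam - lm) * t) / (2 * lam - lm)).
  { rewrite <- Ig_expg by lra. apply Ig_le with M (2 * lam - lm) (Rabs M) (2 * lam - lm); try lra.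
    apply cont_gB; auto. eapply ebound_gB; eauto. apply cont_expg. apply ebound_expg.
    intros s Hs. apply (ebound_gB lam lm β f M1 M2); auto. lra. }
  unfold Q1, Rdiv. rewrite Rabs_mult, (Rabs_pos_eq (/ (lam - lm))) by (left; apply Rinv_0_lt_compat; lra).
  apply Rmult_le_compat_r. left; apply Rinv_0_lt_compat; lra.
  eapply Rle_trans. apply Rabs_triang. rewrite Rabs_Ropp, !Rabs_mult.
  rewrite (Rabs_pos_eq (exp (lam * t))), (Rabs_pos_eq (exp (lm * t))), (Rabs_pos_eq lam), (Rabs_left lm) by (try left; try apply exp_pos; lra).
  assert (E: M * exp (2 * lam * t) * (1 + - lm * / (2 * lam - lm)) =
     exp (lam * t) * (lam * (M * exp (lam * t) * / lam)) + exp (lm * t) * (- lm * (M * exp ((2 * lam - lm) * t) * / (2 * lam - lm)))).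
  { replace (2 * lam * t) with (lam * t + lam * t) by ring.
    replace ((2 * lam - lm) * t) with ((lam * t + lam * t) + - (lm * t)) by ring.
    rewrite !exp_plus, exp_Ropp. pose proof (exp_pos (lm * t)). field; repeat split; lra. }
  rewrite E. unfold Rdiv in HA, HB.
  pose proof (exp_pos (lam * t)). pose proof (exp_pos (lm * t)).
  apply Rplus_le_compat; apply Rmult_le_compat_l; try lra; apply Rmult_le_compat_l; lra.
Qed.

Lemma Q_cont lam lm f : cont f -> lm < lam -> cont (Q lam lm f).
Proof.
  intros Hc Hl s. apply (ex_derive_continuous (K:=R_AbsRing) (V:=R_NormedModule)).
  exists (Q1 lam lm f s). apply Q_deriv; auto.
Qed.

Definition phi c p m y := Rpower c p - Rpower (c + y) p + p * m * y.
Definition dphi c p m y := p * (m - Rpower (c + y) (p - 1)).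
Definition hh c p m w := phi c p m (Rabs w).

Lemma Rpower_pm1 X p : 0 < X -> Rpower X (p - 1) = Rpower X p / X.
Proof.
  intros HX. unfold Rpower. replace ((p - 1) * ln X) with (p * ln X + - ln X) by ring.
  rewrite exp_plus, exp_Ropp, exp_ln by auto. field. lra.
Qed.

Lemma phi_deriv c p m y : 0 < c + y -> is_derive (phi c p m) y (dphi c p m y).
Proof.
  intros H. unfold phi, dphi. rewrite Rpower_pm1 by auto. unfold Rpower.
  auto_derive. lra. field. lra.
Qed.

Lemma phi_cont c p m y : 0 < c + y -> continuous (phi c p m) y.
Proof.
  intros H. apply (ex_derive_continuous (K:=R_AbsRing) (V:=R_NormedModule)).
  exists (dphi c p m y). apply phi_deriv; auto.
Qed.

Lemma phi_0 c p m : phi c p m 0 = 0.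
Proof. unfold phi. rewrite Rplus_0_r. ring. Qed.

Lemma Rpower_pos X q : 0 < Rpower X q.
Proof. apply exp_pos. Qed.

Lemma bern_neg z q : 0 <= z -> q <= 0 -> 1 + q * z <= Rpower (1 + z) q /\ Rpower (1 + z) q <= 1.
Proof.
  intros Hz Hq. unfold Rpower.
  assert (H1: 0 <= ln (1 + z)). { rewrite <- ln_1. apply ln_le; lra. }
  assert (H2: ln (1 + z) <= z).
  { pose proof (exp_ineq1_le z). apply Rle_trans with (ln (exp z)). apply ln_le; lra. rewrite ln_exp; lra. }
  split.
  - pose proof (exp_ineq1_le (q * ln (1 + z))).
    assert (q * z <= q * ln (1 + z)) by (apply Rmult_le_compat_neg_l; lra). lra.
  - assert (HH: q * ln (1 + z) <= q * 0) by (apply Rmult_le_compat_neg_l; lra).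
    rewrite Rmult_0_r in HH. pose proof (exp_le_mono _ _ HH) as HE. rewrite exp_0 in HE. exact HE.
Qed.

Lemma dphi_facts c p m y : 0 < c -> p < 1 -> m = Rpower c (p - 1) -> 0 <= y ->
  0 < Rpower (c + y) (p - 1) /\ Rpower (c + y) (p - 1) <= m /\
  m - Rpower (c + y) (p - 1) <= (1 - p) * (m / c) * y.
Proof.
  intros Hc Hp Hm Hy.
  assert (E: Rpower (c + y) (p - 1) = m * Rpower (1 + y / c) (p - 1)).
  { rewrite Hm, Rpower_mult_distr. f_equal. field. lra. lra.
    apply Rplus_lt_le_0_compat. lra. apply Rdiv_le_0_compat; lra. }
  destruct (bern_neg (y / c) (p - 1)) as [B1 B2]. apply Rdiv_le_0_compat; lra. lra.
  assert (0 < m) by (rewrite Hm; apply Rpower_pos).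
  split. apply Rpower_pos. rewrite E. split. nra.
  assert (m * (1 + (p - 1) * (y / c)) <= m * Rpower (1 + y / c) (p - 1)) by nra.
  assert (m * (1 + (p - 1) * (y / c)) = m - (1 - p) * (m / c) * y) by (field; lra).
  lra.
Qed.

Lemma phi_mvt c p m x y : 0 < c -> 0 <= x <= y ->
  exists xi, x <= xi <= y /\ phi c p m y - phi c p m x = dphi c p m xi * (y - x).
Proof.
  intros Hc Hxy.
  destruct (MVT_gen (phi c p m) x y (dphi c p m)) as [xi [Hxi E]].
  - intros z Hz. apply phi_deriv. rewrite Rmin_left, Rmax_right in Hz by lra. lra.
  - intros z Hz. apply continuity_pt_filterlim. apply phi_cont. rewrite Rmin_left, Rmax_right in Hz by lra. lra.
  - rewrite Rmin_left, Rmax_right in Hxi by lra. exists xi; split; auto.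
Qed.

Lemma phi_lip_gen c p m x y K : 0 < c -> p < 1 -> m = Rpower c (p - 1) -> 0 <= x -> 0 <= y ->
  (forall xi, Rmin x y <= xi <= Rmax x y -> Rabs (dphi c p m xi) <= K) ->
  Rabs (phi c p m y - phi c p m x) <= K * Rabs (y - x).
Proof.
  intros Hc Hp Hm Hx Hy HK.
  destruct (Rle_dec x y).
  - destruct (phi_mvt c p m x y) as [xi [Hxi E]]; auto. rewrite E, Rabs_mult.
    apply Rmult_le_compat_r. apply Rabs_pos. apply HK. rewrite Rmin_left, Rmax_right; lra.
  - destruct (phi_mvt c p m y x) as [xi [Hxi E]]; auto. lra.
    replace (phi c p m y - phi c p m x) with (- (phi c p m x - phi c p m y)) by ring.
    rewrite Rabs_Ropp, E, Rabs_mult. replace (y - x) with (- (x - y)) by ring. rewrite Rabs_Ropp.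
    apply Rmult_le_compat_r. apply Rabs_pos. apply HK. rewrite Rmin_right, Rmax_left; lra.
Qed.

Lemma dphi_glob c p m xi : 0 < c -> p < 1 -> m = Rpower c (p - 1) -> 0 <= xi ->
  Rabs (dphi c p m xi) <= Rabs p * m.
Proof.
  intros Hc Hp Hm Hxi. destruct (dphi_facts c p m xi) as [A [B C]]; auto.
  unfold dphi. rewrite Rabs_mult, (Rabs_pos_eq (m - _)) by lra.
  apply Rmult_le_compat_l. apply Rabs_pos. lra.
Qed.

Lemma dphi_loc c p m xi : 0 < c -> p < 1 -> m = Rpower c (p - 1) -> 0 <= xi ->
  Rabs (dphi c p m xi) <= Rabs p * (1 - p) * (m / c) * xi.
Proof.
  intros Hc Hp Hm Hxi. destruct (dphi_facts c p m xi) as [A [B C]]; auto.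
  unfold dphi. rewrite Rabs_mult, (Rabs_pos_eq (m - _)) by lra.
  rewrite !Rmult_assoc. apply Rmult_le_compat_l. apply Rabs_pos. lra.
Qed.

Lemma hh_lip c p m x y : 0 < c -> p < 1 -> m = Rpower c (p - 1) ->
  Rabs (hh c p m x - hh c p m y) <= Rabs p * m * Rabs (x - y).
Proof.
  intros Hc Hp Hm. unfold hh.
  eapply Rle_trans. apply (phi_lip_gen c p m (Rabs y) (Rabs x) (Rabs p * m)); auto; try apply Rabs_pos.
  intros xi Hxi. apply dphi_glob; auto. pose proof (Rabs_pos x); pose proof (Rabs_pos y).
  apply Rle_trans with (Rmin (Rabs y) (Rabs x)). apply Rmin_glb; lra. lra.
  apply Rmult_le_compat_l. assert (0 < m) by (rewrite Hm; apply Rpower_pos). pose proof (Rabs_pos p); nra.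
  apply Rabs_triang_inv2.
Qed.

Lemma hh_lip_loc c p m x y W : 0 < c -> p < 1 -> m = Rpower c (p - 1) -> Rabs x <= W -> Rabs y <= W ->
  Rabs (hh c p m x - hh c p m y) <= Rabs p * (1 - p) * (m / c) * W * Rabs (x - y).
Proof.
  intros Hc Hp Hm Hx Hy. unfold hh.
  assert (0 < m) by (rewrite Hm; apply Rpower_pos).
  pose proof (Rabs_pos x); pose proof (Rabs_pos y); pose proof (Rabs_pos p).
  assert (HK0: 0 <= Rabs p * (1 - p) * (m / c)).
  { apply Rmult_le_pos. apply Rmult_le_pos; lra. apply Rdiv_le_0_compat; lra. }
  assert (HK: 0 <= Rabs p * (1 - p) * (m / c) * W) by (apply Rmult_le_pos; lra).
  eapply Rle_trans. apply (phi_lip_gen c p m (Rabs y) (Rabs x) (Rabs p * (1 - p) * (m / c) * W)); auto.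
  intros xi Hxi.
  assert (0 <= xi). { apply Rle_trans with (Rmin (Rabs y) (Rabs x)). apply Rmin_glb; lra. lra. }
  assert (xi <= W). { apply Rle_trans with (Rmax (Rabs y) (Rabs x)). lra. apply Rmax_lub; lra. }
  eapply Rle_trans. apply dphi_loc; auto.
  apply Rmult_le_compat_l; auto.
  apply Rmult_le_compat_l; auto.
  apply Rabs_triang_inv2.
Qed.

Lemma hh_quad c p m x : 0 < c -> p < 1 -> m = Rpower c (p - 1) ->
  Rabs (hh c p m x) <= Rabs p * (1 - p) * (m / c) * (x * x).
Proof.
  intros Hc Hp Hm.
  pose proof (hh_lip_loc c p m x 0 (Rabs x) Hc Hp Hm (Rle_refl _)) as H.
  rewrite Rabs_R0 in H. specialize (H (Rabs_pos x)).
  unfold hh at 2 in H. rewrite Rabs_R0, phi_0, Rminus_0_r, Rminus_0_r in H.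
  replace (x * x) with (Rabs x * Rabs x). lra.
  rewrite <- Rabs_mult. apply Rabs_pos_eq. nra.
Qed.

Lemma g_pos c p m y : 0 < c -> p < 1 -> m = Rpower c (p - 1) -> 0 < y ->
  0 < m * (1 - p) * y + phi c p m y.
Proof.
  intros Hc Hp Hm Hy.
  destruct (phi_mvt c p m 0 y) as [xi [Hxi E]]; auto. lra.
  rewrite phi_0, !Rminus_0_r in E. rewrite E.
  destruct (dphi_facts c p m xi) as [A [B C]]; auto. lra.
  unfold dphi.
  replace (m * (1 - p) * y + p * (m - Rpower (c + xi) (p - 1)) * y)
    with ((m - p * Rpower (c + xi) (p - 1)) * y) by ring.
  apply Rmult_lt_0_compat; auto.
  destruct (Rle_dec 0 p). nra. nra.
Qed.

Lemma hh_cont c p m (F : R -> R) : 0 < c -> cont F -> cont (fun s => hh c p m (F s)).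
Proof.
  intros Hc HF s. unfold hh.
  apply (continuous_comp (fun s => Rabs (F s)) (phi c p m)).
  apply continuous_Rabs_comp. apply HF.
  apply phi_cont. pose proof (Rabs_pos (F s)). lra.
Qed.

Record prm := mkprm { P_lam : R; P_lm : R; P_k : R; P_mu : R; P_c : R; P_p : R; P_m : R;
  P_beta : R; P_eps : R; P_R : R }.

Definition Lip P := Rabs (P_p P) * P_m P.
Definition C3 P := Rabs (P_p P) * (1 - P_p P) * (P_m P / P_c P).
Definition eta P := C3 P * (P_eps P + 2 * P_R P).
Definition D0 P := P_lam P * (2 * P_lam P - P_lm P).
Definition Db P := (P_beta P - P_lam P) * (P_beta P - P_lm P).

Definition good P : Prop :=
  0 < P_lam P /\ P_lm P < 0 /\ 2 * P_lam P <= P_beta P /\ 0 < P_c P /\ P_p P < 1 /\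
  P_m P = Rpower (P_c P) (P_p P - 1) /\ 0 < P_eps P /\ 0 < P_R P /\
  eta P <= D0 P / 2 /\ eta P + 2 * Lip P <= Db P / 2 /\ C3 P * (P_eps P * P_eps P) <= D0 P * P_R P / 2 /\
  P_lam P * P_lam P + P_k P * P_lam P - P_mu P = 0 /\ P_lm P * P_lm P + P_k P * P_lm P - P_mu P = 0.

Definition rho P s := exp (2 * P_lam P * s) + exp (P_beta P * s).
Definition fh P (r : R -> R) s := hh (P_c P) (P_p P) (P_m P) (P_eps P * exp (P_lam P * s) + r s).
Definition inS P r := cont r /\ forall s, Rabs (r s) <= P_R P * rho P s.

Ltac gd HP := destruct HP as (Hlam & Hlm & Hbeta & Hc & Hp & Hm & Heps & HR & Heta & HLip & HC3 & Hode1 & Hode2).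

Lemma good_facts P : good P ->
  0 < D0 P /\ 0 < Db P /\ 0 <= Lip P /\ 0 <= C3 P /\ 0 <= eta P /\ 0 < P_m P.
Proof.
  intros HP. pose proof HP as HP'. gd HP'.
  assert (0 < P_m P) by (rewrite Hm; apply Rpower_pos).
  unfold D0, Db, Lip, eta, C3. pose proof (Rabs_pos (P_p P)).
  assert (0 <= Rabs (P_p P) * (1 - P_p P) * (P_m P / P_c P)).
  { apply Rmult_le_pos. apply Rmult_le_pos; lra. apply Rdiv_le_0_compat; lra. }
  repeat split; try nra.
Qed.

Lemma cont_fh P r : good P -> cont r -> cont (fh P r).
Proof.
  intros HP Hr. gd HP. unfold fh. apply hh_cont; auto.
  intro s. apply (continuous_plus (V:=R_NormedModule)). cdv. apply Hr.
Qed.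

Lemma rho_le P s : good P -> exp (2 * P_lam P * s) <= rho P s /\ exp (P_beta P * s) <= rho P s.
Proof. intros. unfold rho. pose proof (exp_pos (2 * P_lam P * s)); pose proof (exp_pos (P_beta P * s)). lra. Qed.

Lemma diff_bound P r1 r2 N : good P -> inS P r1 -> inS P r2 -> 0 <= N ->
  (forall s, Rabs (r1 s - r2 s) <= N * rho P s) ->
  eb2 (P_lam P) (P_beta P) (fun s => fh P r1 s - fh P r2 s) (N * eta P) (N * (eta P + 2 * Lip P)).
Proof.
  intros HP [Hc1 Hb1] [Hc2 Hb2] HN Hd s.
  destruct (good_facts P HP) as (HD0 & HDb & HL & HC & He & Hm0).
  pose proof HP as HP'. gd HP'. unfold fh.
  pose proof (exp_pos (2 * P_lam P * s)); pose proof (exp_pos (P_beta P * s)).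
  destruct (Rle_dec s 0) as [Hs0|Hs0].
  - assert (E1: exp (P_lam P * s) <= 1) by (rewrite <- exp_0; apply exp_le_mono; nra).
    assert (E2: exp (2 * P_lam P * s) <= 1) by (rewrite <- exp_0; apply exp_le_mono; nra).
    assert (E3: exp (P_beta P * s) <= 1) by (rewrite <- exp_0; apply exp_le_mono; nra).
    assert (Hw: forall r0, (forall s, Rabs (r0 s) <= P_R P * rho P s) ->
       Rabs (P_eps P * exp (P_lam P * s) + r0 s) <= P_eps P + 2 * P_R P).
    { intros r0 Hr. eapply Rle_trans. apply Rabs_triang. specialize (Hr s). unfold rho in Hr.
      rewrite Rabs_mult, !Rabs_pos_eq by (try left; try apply exp_pos; lra).
      pose proof (exp_pos (P_lam P * s)). nra. }
    eapply Rle_trans. apply (hh_lip_loc _ _ _ _ _ (P_eps P + 2 * P_R P) Hc Hp Hm (Hw r1 Hb1) (Hw r2 Hb2)).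
    replace (P_eps P * exp (P_lam P * s) + r1 s - (P_eps P * exp (P_lam P * s) + r2 s)) with (r1 s - r2 s) by ring.
    change (Rabs (P_p P) * (1 - P_p P) * (P_m P / P_c P) * (P_eps P + 2 * P_R P)) with (eta P).
    specialize (Hd s). unfold rho in Hd.
    assert (eta P * Rabs (r1 s - r2 s) <= eta P * (N * (exp (2 * P_lam P * s) + exp (P_beta P * s))))
      by (apply Rmult_le_compat_l; auto).
    assert (0 <= N * (2 * Lip P) * exp (P_beta P * s)) by (apply Rmult_le_pos; nra).
    nra.
  - assert (E: exp (2 * P_lam P * s) <= exp (P_beta P * s)) by (apply exp_le_mono; nra).
    eapply Rle_trans. apply hh_lip; auto.
    replace (P_eps P * exp (P_lam P * s) + r1 s - (P_eps P * exp (P_lam P * s) + r2 s)) with (r1 s - r2 s) by ring.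
    change (Rabs (P_p P) * P_m P) with (Lip P). specialize (Hd s). unfold rho in Hd.
    assert (Lip P * Rabs (r1 s - r2 s) <= Lip P * (N * (exp (2 * P_lam P * s) + exp (P_beta P * s))))
      by (apply Rmult_le_compat_l; auto).
    assert (0 <= N * eta P * exp (2 * P_lam P * s)) by (apply Rmult_le_pos; nra).
    assert (0 <= N * eta P * exp (P_beta P * s)) by (apply Rmult_le_pos; nra).
    assert (N * Lip P * exp (2 * P_lam P * s) <= N * Lip P * exp (P_beta P * s)) by (apply Rmult_le_compat_l; nra).
    nra.
Qed.

Lemma f0_bound P s : good P -> Rabs (fh P (fun _ => 0) s) <= C3 P * (P_eps P * P_eps P) * exp (2 * P_lam P * s).
Proof.
  intros HP. pose proof HP as HP'. gd HP'. unfold fh. rewrite Rplus_0_r.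
  eapply Rle_trans. apply hh_quad; auto. fold (C3 P).
  replace (P_eps P * exp (P_lam P * s) * (P_eps P * exp (P_lam P * s))) with
    (P_eps P * P_eps P * (exp (P_lam P * s) * exp (P_lam P * s))) by ring.
  rewrite <- exp_plus. replace (P_lam P * s + P_lam P * s) with (2 * P_lam P * s) by ring.
  right; ring.
Qed.

Lemma inS_0 P : good P -> inS P (fun _ => 0).
Proof.
  intros HP. split. intro s. apply (continuous_const (U:=R_UniformSpace)).
  intros s. rewrite Rabs_R0. unfold rho. pose proof (exp_pos (2 * P_lam P * s)); pose proof (exp_pos (P_beta P * s)).
  gd HP. nra.
Qed.

Lemma fh_bound P r : good P -> inS P r ->
  eb2 (P_lam P) (P_beta P) (fh P r) (C3 P * (P_eps P * P_eps P) + P_R P * eta P) (P_R P * (eta P + 2 * Lip P)).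
Proof.
  intros HP HS s.
  destruct (good_facts P HP) as (HD0 & HDb & HL & HC & He & Hm0).
  pose proof (diff_bound P r (fun _ => 0) (P_R P) HP HS (inS_0 P HP)) as H.
  assert (HR: 0 <= P_R P) by (gd HP; lra).
  specialize (H HR). assert (H2: forall s, Rabs (r s - 0) <= P_R P * rho P s).
  { intros; rewrite Rminus_0_r; apply HS. }
  specialize (H H2 s). simpl in H. pose proof (f0_bound P s HP).
  replace (fh P r s) with ((fh P r s - fh P (fun _ => 0) s) + fh P (fun _ => 0) s) by ring.
  eapply Rle_trans. apply Rabs_triang. lra.
Qed.

Lemma Q_inS P r : good P -> inS P r -> inS P (Q (P_lam P) (P_lm P) (fh P r)).
Proof.
  intros HP HS.
  destruct (good_facts P HP) as (HD0 & HDb & HL & HC & He & Hm0).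
  pose proof HP as HP'. gd HP'.
  split. apply Q_cont. apply cont_fh; auto. apply HS. lra.
  intros t. eapply Rle_trans. apply (Q_bound _ _ (P_beta P)) ; auto.
  apply cont_fh; auto. apply HS. apply fh_bound; auto.
  apply Rplus_le_le_0_compat. apply Rmult_le_pos; nra. nra. nra.
  fold (D0 P) (Db P). unfold rho.
  pose proof (exp_pos (2 * P_lam P * t)); pose proof (exp_pos (P_beta P * t)).
  assert (A1: (C3 P * (P_eps P * P_eps P) + P_R P * eta P) / D0 P <= P_R P).
  { apply Rle_div_l; auto. nra. }
  assert (A2: P_R P * (eta P + 2 * Lip P) / Db P <= P_R P).
  { apply Rle_div_l; auto. nra. }
  unfold Rdiv in *.
  replace ((C3 P * (P_eps P * P_eps P) + P_R P * eta P) * exp (2 * P_lam P * t) * / D0 P)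
    with ((C3 P * (P_eps P * P_eps P) + P_R P * eta P) * / D0 P * exp (2 * P_lam P * t)) by ring.
  replace (P_R P * (eta P + 2 * Lip P) * exp (P_beta P * t) * / Db P)
    with (P_R P * (eta P + 2 * Lip P) * / Db P * exp (P_beta P * t)) by ring.
  nra.
Qed.

Lemma Q_contr P r1 r2 N t : good P -> inS P r1 -> inS P r2 -> 0 <= N ->
  (forall s, Rabs (r1 s - r2 s) <= N * rho P s) ->
  Rabs (Q (P_lam P) (P_lm P) (fh P r1) t - Q (P_lam P) (P_lm P) (fh P r2) t) <= N / 2 * rho P t.
Proof.
  intros HP H1 H2 HN Hd.
  destruct (good_facts P HP) as (HD0 & HDb & HL & HC & He & Hm0).
  pose proof (fh_bound P r1 HP H1) as B1. pose proof (fh_bound P r2 HP H2) as B2.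
  pose proof HP as HP'. gd HP'.
  rewrite <- (Q_minus _ _ (P_beta P) _ _ (C3 P * (P_eps P * P_eps P) + P_R P * eta P) (P_R P * (eta P + 2 * Lip P))
     (C3 P * (P_eps P * P_eps P) + P_R P * eta P) (P_R P * (eta P + 2 * Lip P)) t); auto.
  2: apply cont_fh; auto; apply H1.
  2: apply cont_fh; auto; apply H2.
  2,3: apply Rmult_le_pos; nra.
  assert (Cd: cont (fun s => fh P r1 s - fh P r2 s)).
  { intro s. apply (continuous_minus (V:=R_NormedModule)); apply cont_fh; auto; [apply H1 | apply H2]. }
  assert (Bd := diff_bound P r1 r2 N HP H1 H2 HN Hd).
  assert (P1: 0 <= N * eta P) by (apply Rmult_le_pos; nra).
  assert (P2: 0 <= N * (eta P + 2 * Lip P)) by (apply Rmult_le_pos; nra).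
  eapply Rle_trans. apply (Q_bound _ _ (P_beta P) _ _ _ t Cd Bd Hlam Hlm Hbeta P1 P2).
  fold (D0 P) (Db P). unfold rho.
  pose proof (exp_pos (2 * P_lam P * t)); pose proof (exp_pos (P_beta P * t)).
  assert (A1: N * eta P / D0 P <= N / 2).
  { apply Rle_div_l; auto. nra. }
  assert (A2: N * (eta P + 2 * Lip P) / Db P <= N / 2).
  { apply Rle_div_l; auto. nra. }
  unfold Rdiv in *.
  replace (N * eta P * exp (2 * P_lam P * t) * / D0 P) with (N * eta P * / D0 P * exp (2 * P_lam P * t)) by ring.
  replace (N * (eta P + 2 * Lip P) * exp (P_beta P * t) * / Db P)
    with (N * (eta P + 2 * Lip P) * / Db P * exp (P_beta P * t)) by ring.
  nra.
Qed.

Fixpoint it P n : R -> R :=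
  match n with O => fun _ => 0 | S n => Q (P_lam P) (P_lm P) (fh P (it P n)) end.

Lemma it_inS P n : good P -> inS P (it P n).
Proof. intros HP. induction n. apply inS_0; auto. simpl. apply Q_inS; auto. Qed.

Lemma rho_pos P t : 0 < rho P t.
Proof. unfold rho. pose proof (exp_pos (2 * P_lam P * t)); pose proof (exp_pos (P_beta P * t)). lra. Qed.

Lemma it_diff P n t : good P -> Rabs (it P (S n) t - it P n t) <= P_R P * (/2) ^ n * rho P t.
Proof.
  intros HP. revert t. induction n; intros t.
  - simpl. rewrite Rminus_0_r, Rmult_1_r. apply (it_inS P 1 HP).
  - assert (E1: it P (S (S n)) t = Q (P_lam P) (P_lm P) (fh P (it P (S n))) t) by reflexivity.
    assert (E2: it P (S n) t = Q (P_lam P) (P_lm P) (fh P (it P n)) t) by reflexivity.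
    rewrite E1, E2.
    eapply Rle_trans. apply Q_contr; auto using it_inS.
    apply Rmult_le_pos. gd HP; lra. apply pow_le; lra.
    simpl. right; field.
Qed.

Lemma it_cauchy P n j t : good P ->
  Rabs (it P (n + j) t - it P n t) <= 2 * P_R P * ((/2) ^ n - (/2) ^ (n + j)) * rho P t.
Proof.
  intros HP. induction j.
  - rewrite Nat.add_0_r, Rminus_diag, Rabs_R0. right; ring.
  - replace (it P (n + S j) t - it P n t) with ((it P (S (n + j)) t - it P (n + j) t) + (it P (n + j) t - it P n t))
      by (rewrite Nat.add_succ_r; ring).
    eapply Rle_trans. apply Rabs_triang.
    pose proof (it_diff P (n + j) t HP).
    rewrite Nat.add_succ_r. simpl pow. lra.
Qed.

Lemma pow_half_le n j : (/2) ^ (n + j) <= (/2) ^ n.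
Proof.
  induction j. rewrite Nat.add_0_r; lra.
  rewrite Nat.add_succ_r. simpl pow. pose proof (pow_le (/2) (n + j)). lra.
Qed.

Lemma it_close P n m t : good P -> (n <= m)%nat ->
  Rabs (it P m t - it P n t) <= 2 * P_R P * (/2) ^ n * rho P t.
Proof.
  intros HP Hnm. replace m with (n + (m - n))%nat by lia.
  eapply Rle_trans. apply it_cauchy; auto.
  pose proof (pow_le (/2) (n + (m - n))). pose proof (rho_pos P t).
  assert (0 < P_R P) by (gd HP; lra).
  assert (0 <= 2 * P_R P * (/2) ^ (n + (m - n)) * rho P t) by (repeat apply Rmult_le_pos; lra).
  replace (2 * P_R P * ((/ 2) ^ n - (/ 2) ^ (n + (m - n))) * rho P t) with
    (2 * P_R P * (/ 2) ^ n * rho P t - 2 * P_R P * (/2) ^ (n + (m - n)) * rho P t) by ring. lra.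
Qed.

Lemma it_cv P t : good P -> ex_finite_lim_seq (fun n => it P n t).
Proof.
  intros HP. apply ex_lim_seq_cauchy_corr. intros eps.
  assert (HR: 0 < P_R P) by (gd HP; lra). pose proof (rho_pos P t).
  destruct (pow_lt_1_zero (/2)) with (y := eps / (2 * P_R P * rho P t)) as [N HN].
  rewrite Rabs_pos_eq; lra. apply Rdiv_lt_0_compat. apply cond_pos. nra.
  exists N. intros n m Hn Hm.
  specialize (HN N (le_n N)). rewrite Rabs_pos_eq in HN by (apply pow_le; lra).
  assert (HH: forall a b, (N <= a)%nat -> (a <= b)%nat -> Rabs (it P b t - it P a t) < eps).
  { intros a b Ha Hb. eapply Rle_lt_trans. apply it_close; auto.
    replace a with (N + (a - N))%nat by lia. pose proof (pow_half_le N (a - N)).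
    apply Rle_lt_trans with (2 * P_R P * (/ 2) ^ N * rho P t).
    apply Rmult_le_compat_r. lra. apply Rmult_le_compat_l. lra. auto.
    apply Rmult_lt_compat_r with (r := 2 * P_R P * rho P t) in HN. 2: nra.
    replace (eps / (2 * P_R P * rho P t) * (2 * P_R P * rho P t)) with (pos eps) in HN by (field; nra). nra. }
  destruct (Nat.le_gt_cases n m).
  - rewrite <- Rabs_Ropp. replace (- (it P n t - it P m t)) with (it P m t - it P n t) by ring. apply HH; auto.
  - apply HH; lia.
Qed.

Definition rl P t := real (Lim_seq (fun n => it P n t)).

Lemma rl_lim P t : good P -> is_lim_seq (fun n => it P n t) (rl P t).
Proof.
  intros HP. destruct (it_cv P t HP) as [l Hl]. unfold rl. rewrite (is_lim_seq_unique _ _ Hl). simpl. auto.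
Qed.

Lemma rl_close P n t : good P -> Rabs (rl P t - it P n t) <= 2 * P_R P * (/2) ^ n * rho P t.
Proof.
  intros HP.
  assert (L: is_lim_seq (fun m => Rabs (it P m t - it P n t)) (Rabs (rl P t - it P n t))).
  { apply (is_lim_seq_abs _ (rl P t - it P n t)). apply is_lim_seq_minus'. apply rl_lim; auto. apply is_lim_seq_const. }
  assert (Rbar_le (Rabs (rl P t - it P n t)) (2 * P_R P * (/2) ^ n * rho P t)).
  { refine (is_lim_seq_le_loc _ _ _ _ _ L (is_lim_seq_const _)). exists n. intros m Hm. apply it_close; auto. }
  simpl in H. auto.
Qed.

Lemma rl_bound P t : good P -> Rabs (rl P t) <= P_R P * rho P t.
Proof.
  intros HP.
  assert (L: is_lim_seq (fun m => Rabs (it P m t)) (Rabs (rl P t))).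
  { apply (is_lim_seq_abs _ (rl P t)). apply rl_lim; auto. }
  assert (Rbar_le (Rabs (rl P t)) (P_R P * rho P t)).
  { refine (is_lim_seq_le _ _ _ _ _ L (is_lim_seq_const _)). intros m. apply (it_inS P m HP). }
  simpl in H. auto.
Qed.

Lemma rl_cont P : good P -> cont (rl P).
Proof.
  intros HP t0. apply continuity_pt_filterlim.
  unfold continuity_pt, continue_in, limit1_in, limit_in. simpl. unfold R_dist.
  intros eps Heps0.
  assert (HR0: 0 < P_R P) by (pose proof HP as HP'; gd HP'; lra).
  set (B := 2 * P_R P * rho P (t0 + 1)). assert (HB: 0 < B) by (unfold B; pose proof (rho_pos P (t0+1)); nra).
  destruct (pow_lt_1_zero (/2)) with (y := eps / (3 * B)) as [N HN].
  rewrite Rabs_pos_eq; lra. apply Rdiv_lt_0_compat; lra.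
  specialize (HN N (le_n N)). rewrite Rabs_pos_eq in HN by (apply pow_le; lra).
  assert (Hb: forall t, t <= t0 + 1 -> Rabs (rl P t - it P N t) < eps / 3).
  { intros t Ht. eapply Rle_lt_trans. apply rl_close; auto.
    assert (rho P t <= rho P (t0 + 1)).
    { unfold rho. pose proof HP as HP'. gd HP'. assert (exp (2 * P_lam P * t) <= exp (2 * P_lam P * (t0 + 1))) by (apply exp_le_mono; nra).
      assert (exp (P_beta P * t) <= exp (P_beta P * (t0 + 1))) by (apply exp_le_mono; nra). lra. }
    apply Rmult_lt_compat_r with (r := B) in HN; auto.
    replace (eps / (3 * B) * B) with (eps / 3) in HN by (field; lra).
    unfold B in HN. pose proof (pow_le (/2) N). pose proof (rho_pos P t). nra. }
  pose proof (it_inS P N HP) as [Hc _].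
  pose proof (proj2 (continuity_pt_filterlim _ _) (Hc t0)) as Hcp.
  unfold continuity_pt, continue_in, limit1_in, limit_in in Hcp. simpl in Hcp. unfold R_dist in Hcp.
  destruct (Hcp (eps / 3)) as [alp [Halp Hal]]. lra.
  exists (Rmin alp 1). split. apply Rmin_glb_lt; lra.
  intros x [_ Hx].
  assert (Hx1: Rabs (x - t0) < alp) by (eapply Rlt_le_trans; [exact Hx | apply Rmin_l]).
  assert (Hx2: Rabs (x - t0) < 1) by (eapply Rlt_le_trans; [exact Hx | apply Rmin_r]).
  destruct (Req_dec x t0) as [E|E]. subst. rewrite Rminus_diag, Rabs_R0; lra.
  specialize (Hal x). assert (HH: Rabs (it P N x - it P N t0) < eps / 3).
  { apply Hal. split. unfold D_x, no_cond. split; auto. auto. }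
  replace (rl P x - rl P t0) with ((rl P x - it P N x) + (it P N x - it P N t0) - (rl P t0 - it P N t0)) by ring.
  assert (A1: Rabs (rl P x - it P N x) < eps / 3).
  { apply Hb. apply Rabs_def2 in Hx2. lra. }
  assert (A2: Rabs (rl P t0 - it P N t0) < eps / 3) by (apply Hb; lra).
  eapply Rle_lt_trans. apply Rabs_triang. rewrite Rabs_Ropp.
  eapply Rle_lt_trans. apply Rplus_le_compat_r. apply Rabs_triang. lra.
Qed.

Lemma rl_inS P : good P -> inS P (rl P).
Proof. intros HP. split. apply rl_cont; auto. intros; apply rl_bound; auto. Qed.

Lemma rl_fix P t : good P -> Q (P_lam P) (P_lm P) (fh P (rl P)) t = rl P t.
Proof.
  intros HP.
  assert (L1: is_lim_seq (fun n => it P (S n) t) (rl P t)).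
  { apply (is_lim_seq_incr_1 (fun n => it P n t)). apply rl_lim; auto. }
  assert (L2: is_lim_seq (fun n => it P (S n) t) (Q (P_lam P) (P_lm P) (fh P (rl P)) t)).
  { set (q := Q (P_lam P) (P_lm P) (fh P (rl P)) t).
    assert (HR: 0 < P_R P) by (gd HP; lra).
    assert (G: is_lim_seq (fun n => q - P_R P * rho P t * (/2) ^ n) q /\ is_lim_seq (fun n => q + P_R P * rho P t * (/2) ^ n) q).
    { pose proof (is_lim_seq_geom (/2)) as Hg. rewrite Rabs_pos_eq in Hg by lra. specialize (Hg ltac:(lra)).
      pose proof (is_lim_seq_scal_l _ (P_R P * rho P t) _ Hg) as Hg2. simpl in Hg2. rewrite Rmult_0_r in Hg2.
      split.
      - pose proof (is_lim_seq_minus' _ _ _ _ (is_lim_seq_const q) Hg2) as H3. rewrite Rminus_0_r in H3. exact H3.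
      - pose proof (is_lim_seq_plus' _ _ _ _ (is_lim_seq_const q) Hg2) as H3. rewrite Rplus_0_r in H3. exact H3. }
    destruct G as [G1 G2].
    apply (is_lim_seq_le_le (fun n => q - P_R P * rho P t * (/ 2) ^ n) _ (fun n => q + P_R P * rho P t * (/ 2) ^ n) q); auto. intros n.
    assert (Hc: Rabs (q - it P (S n) t) <= P_R P * rho P t * (/2) ^ n).
    { unfold q. simpl. eapply Rle_trans. apply (Q_contr P _ _ (2 * P_R P * (/2) ^ n)); auto using rl_inS, it_inS.
      apply Rmult_le_pos. apply Rmult_le_pos; lra. apply pow_le; lra.
      intros s. apply rl_close; auto. right; field. }
    pose proof (Rle_abs (q - it P (S n) t)) as Ha. pose proof (Rle_abs (- (q - it P (S n) t))) as Hb.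
    rewrite Rabs_Ropp in Hb. lra. }
  pose proof (is_lim_seq_unique _ _ L1). pose proof (is_lim_seq_unique _ _ L2).
  assert (E: Finite (Q (P_lam P) (P_lm P) (fh P (rl P)) t) = Finite (rl P t)) by congruence.
  now inversion E.
Qed.

Lemma mvt_open f f' a b : a < b -> (forall c, is_derive f c (f' c)) ->
  exists xi, a < xi < b /\ f b - f a = f' xi * (b - a).
Proof.
  intros Hab Hd. destruct (MVT_cor2 f f' a b Hab) as [xi [E H]].
  intros c _. apply is_derive_Reals. apply Hd.
  exists xi; split; auto.
Qed.

Lemma cont_of_deriv f f' : (forall c, is_derive f c (f' c)) -> forall x, continuity_pt f x.
Proof.
  intros Hd x. apply continuity_pt_filterlim.
  apply (ex_derive_continuous (K:=R_AbsRing) (V:=R_NormedModule)). exists (f' x); apply Hd.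
Qed.

Lemma pos_argument (W W1 G : R -> R) k T0 :
  (forall t, is_derive W t (W1 t)) ->
  (forall t, is_derive (fun t => exp (k * t) * W1 t) t (exp (k * t) * G t)) ->
  (forall t, 0 < W t -> 0 < G t) ->
  (forall t, t <= T0 -> 0 < W t /\ 0 < W1 t) ->
  forall t, 0 < W t /\ 0 < W1 t.
Proof.
  intros HW HF HG H0.
  set (F := fun t => exp (k * t) * W1 t).
  assert (KF: forall s, T0 <= s -> (forall u, T0 < u < s -> 0 < W u) -> 0 < F s).
  { intros s Hs Hu. destruct (Req_dec s T0) as [E|E].
    - subst. unfold F. apply Rmult_lt_0_compat. apply exp_pos. apply H0; lra.
    - destruct (mvt_open F (fun t => exp (k * t) * G t) T0 s) as [xi [Hxi Exi]]. lra. apply HF.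
      assert (0 < F T0) by (unfold F; apply Rmult_lt_0_compat; [apply exp_pos | apply H0; lra]).
      assert (0 < exp (k * xi) * G xi) by (apply Rmult_lt_0_compat; [apply exp_pos | apply HG, Hu; lra]).
      assert (0 < exp (k * xi) * G xi * (s - T0)) by (apply Rmult_lt_0_compat; lra). lra. }
  assert (KW1: forall s, T0 <= s -> (forall u, T0 < u < s -> 0 < W u) -> 0 < W1 s).
  { intros s Hs Hu. pose proof (KF s Hs Hu) as H. unfold F in H. pose proof (exp_pos (k * s)).
    apply (Rmult_lt_reg_l (exp (k * s))); auto. lra. }
  assert (KW: forall s, T0 <= s -> (forall u, T0 < u < s -> 0 < W u) -> 0 < W s).
  { intros s Hs Hu. destruct (Req_dec s T0) as [E|E]. subst; apply H0; lra.
    destruct (mvt_open W W1 T0 s) as [xi [Hxi Exi]]. lra. apply HW.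
    assert (0 < W1 xi). { apply KW1. lra. intros u Hu'. apply Hu; lra. }
    assert (0 < W T0) by (apply H0; lra).
    assert (0 < W1 xi * (s - T0)) by (apply Rmult_lt_0_compat; lra). lra. }
  assert (AllW: forall t, 0 < W t).
  { intros t1. destruct (Rle_dec t1 T0). apply H0; auto.
    apply NNPP. intros Hn. assert (Hneg: W t1 <= 0) by lra.
    set (S := fun x => x <= t1 /\ forall s, s <= x -> 0 < W s).
    assert (Hb: bound S). { exists t1. intros x [Hx _]. auto. }
    assert (Hne: exists x, S x). { exists T0. split. lra. intros s Hs. apply H0; auto. }
    destruct (completeness S Hb Hne) as [tau [Hub Hleast]].
    assert (HT0: T0 <= tau). { apply Hub. split. lra. intros s Hs; apply H0; auto. }
    assert (Htt: tau <= t1). { apply Hleast. intros x [Hx _]; auto. }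
    assert (Hbefore: forall s, s < tau -> 0 < W s).
    { intros s Hs. apply NNPP. intros Hn2.
      assert (is_upper_bound S s).
      { intros x [Hx Hx2]. destruct (Rle_dec x s) as [|Hxs]; auto. exfalso. apply Hn2. apply Hx2. lra. }
      pose proof (Hleast s H). lra. }
    assert (Wtau: 0 < W tau). { apply KW; auto. intros u Hu; apply Hbefore; lra. }
    assert (Htt2: tau < t1). { destruct (Req_dec tau t1). subst. lra. lra. }
    pose proof (cont_of_deriv W W1 HW tau) as Hc.
    unfold continuity_pt, continue_in, limit1_in, limit_in in Hc. simpl in Hc. unfold R_dist in Hc.
    destruct (Hc (W tau / 2)) as [alp [Halp Hal]]. lra.
    set (x := Rmin (tau + alp / 2) t1).
    assert (Sx: S x).
    { split. unfold x. apply Rmin_r. intros s Hs. destruct (Rlt_dec s tau). apply Hbefore; auto.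
      destruct (Req_dec s tau) as [Est|Nst]. subst; auto.
      assert (Hd: Rabs (s - tau) < alp).
      { assert (x <= tau + alp / 2) by (unfold x; apply Rmin_l). rewrite Rabs_pos_eq; lra. }
      assert (Hw: Rabs (W s - W tau) < W tau / 2).
      { apply Hal. split. split. exact I. intro E'; apply Nst; auto. auto. }
      apply Rabs_def2 in Hw. lra. }
    pose proof (Hub x Sx). unfold x in H. 
    destruct (Rle_dec (tau + alp / 2) t1).
    rewrite Rmin_left in H by lra. lra. rewrite Rmin_right in H by lra. lra. }
  intros t. split. apply AllW.
  destruct (Rle_dec t T0). apply H0; auto. apply KW1. lra. intros; apply AllW.
Qed.

Lemma strict_incr (W W1 : R -> R) : (forall t, is_derive W t (W1 t)) -> (forall t, 0 < W1 t) ->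
  forall s t, s < t -> W s < W t.
Proof.
  intros HW H s t Hst. destruct (mvt_open W W1 s t Hst HW) as [xi [_ E]].
  pose proof (H xi). assert (0 < W1 xi * (t - s)) by (apply Rmult_lt_0_compat; lra). lra.
Qed.

Lemma div_lt1 a b : 0 < b -> a < b -> a / b < 1.
Proof. intros Hb Hab. apply (Rmult_lt_reg_r b); auto. unfold Rdiv. rewrite Rmult_assoc, Rinv_l by lra. lra. Qed.

Definition W P t := P_eps P * exp (P_lam P * t) + rl P t.
Definition W1 P t := P_eps P * P_lam P * exp (P_lam P * t) + Q1 (P_lam P) (P_lm P) (fh P (rl P)) t.
Definition GG P t := P_mu P * W P t + hh (P_c P) (P_p P) (P_m P) (W P t).
Definition W2 P t := - P_k P * W1 P t + GG P t.

Lemma rl_deriv P t : good P -> is_derive (rl P) t (Q1 (P_lam P) (P_lm P) (fh P (rl P)) t).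
Proof.
  intros HP. apply is_derive_ext with (Q (P_lam P) (P_lm P) (fh P (rl P))).
  intros; apply rl_fix; auto.
  apply Q_deriv. apply cont_fh; auto. apply rl_cont; auto. gd HP; lra.
Qed.

Lemma W_deriv P t : good P -> is_derive (W P) t (W1 P t).
Proof.
  intros HP. pose proof (rl_deriv P t HP) as H.
  assert (ex_derive (rl P) t) by (eexists; eauto).
  unfold W, W1. rewrite <- (is_derive_unique _ _ _ H).
  auto_derive. auto. change (fun x => rl P x) with (rl P). ring.
Qed.

Lemma W1_deriv P t : good P -> is_derive (W1 P) t (W2 P t).
Proof.
  intros HP. pose proof HP as HP'. gd HP'.
  pose proof (Q1_deriv (P_lam P) (P_lm P) (fh P (rl P)) t) as H.
  assert (Hcf: cont (fh P (rl P))) by (apply cont_fh; auto; apply rl_cont; auto).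
  specialize (H Hcf ltac:(lra)).
  assert (ex_derive (Q1 (P_lam P) (P_lm P) (fh P (rl P))) t) by (eexists; eauto).
  unfold W1. eapply is_derive_ext. intros; reflexivity.
  replace (W2 P t) with (P_eps P * P_lam P * (P_lam P * exp (P_lam P * t)) + Q2 (P_lam P) (P_lm P) (fh P (rl P)) t).
  rewrite <- (is_derive_unique _ _ _ H).
  auto_derive. auto. change (fun x => Q1 (P_lam P) (P_lm P) (fh P (rl P)) x) with (Q1 (P_lam P) (P_lm P) (fh P (rl P))). ring.
  rewrite (Q_ode _ _ (P_k P) (P_mu P)); auto; try lra.
  rewrite rl_fix by auto.
  unfold W2, GG, W1, W. unfold fh.
  replace (P_eps P * P_lam P * (P_lam P * exp (P_lam P * t))) with (P_eps P * (P_lam P * P_lam P) * exp (P_lam P * t)) by ring.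
  replace (P_lam P * P_lam P) with (P_mu P - P_k P * P_lam P) by lra. ring.
Qed.

Lemma F_deriv P t : good P ->
  is_derive (fun t => exp (P_k P * t) * W1 P t) t (exp (P_k P * t) * GG P t).
Proof.
  intros HP. pose proof (W1_deriv P t HP) as H.
  assert (ex_derive (W1 P) t) by (eexists; eauto).
  replace (exp (P_k P * t) * GG P t) with (P_k P * exp (P_k P * t) * W1 P t + exp (P_k P * t) * W2 P t)
    by (unfold W2; ring).
  rewrite <- (is_derive_unique _ _ _ H).
  auto_derive. auto. change (fun x => W1 P x) with (W1 P). ring.
Qed.

Lemma GG_pos P t : good P -> P_mu P = P_m P * (1 - P_p P) -> 0 < W P t -> 0 < GG P t.
Proof.
  intros HP Hmu Hw. pose proof HP as HP'. gd HP'. unfold GG, hh. rewrite Rabs_pos_eq by lra.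
  rewrite Hmu. apply g_pos; auto.
Qed.

Lemma near_minf P : good P -> exists T0, forall t, t <= T0 -> 0 < W P t /\ 0 < W1 P t.
Proof.
  intros HP. destruct (good_facts P HP) as (HD0 & HDb & HL & HC & He & Hm0).
  pose proof HP as HP'. gd HP'.
  set (M1 := C3 P * (P_eps P * P_eps P) + P_R P * eta P).
  set (M2 := P_R P * (eta P + 2 * Lip P)).
  set (K1 := (1 + (- P_lm P) / (2 * P_lam P - P_lm P)) / (P_lam P - P_lm P)).
  assert (HK1: 0 <= K1). { unfold K1. apply Rdiv_le_0_compat. 2: lra.
    assert (0 <= - P_lm P / (2 * P_lam P - P_lm P)) by (apply Rdiv_le_0_compat; lra). lra. }
  assert (HM1: 0 <= M1) by (unfold M1; nra). assert (HM2: 0 <= M2) by (unfold M2; nra).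
  set (A := 2 * P_R P). set (B := (M1 + M2) * K1).
  assert (HB: 0 <= B) by (unfold B; nra).
  set (d := Rmin (P_eps P / (2 * A + 1)) (P_eps P * P_lam P / (2 * B + 1))).
  assert (Hd: 0 < d). { unfold d. apply Rmin_glb_lt; apply Rdiv_lt_0_compat; unfold A; nra. }
  assert (Hd1: A * d < P_eps P).
  { apply Rle_lt_trans with (A * (P_eps P / (2 * A + 1))). apply Rmult_le_compat_l. unfold A; lra. apply Rmin_l.
    unfold Rdiv. replace (A * (P_eps P * / (2 * A + 1))) with (P_eps P * (A / (2 * A + 1))) by (field; unfold A; lra).
    assert (A / (2 * A + 1) < 1). { apply div_lt1; unfold A; lra. } unfold Rdiv in *. nra. }
  assert (Hd2: B * d < P_eps P * P_lam P).
  { apply Rle_lt_trans with (B * (P_eps P * P_lam P / (2 * B + 1))). apply Rmult_le_compat_l. lra. apply Rmin_r.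
    unfold Rdiv. replace (B * (P_eps P * P_lam P * / (2 * B + 1))) with (P_eps P * P_lam P * (B / (2 * B + 1))) by (field; lra).
    assert (B / (2 * B + 1) < 1). { apply div_lt1; lra. } assert (0 < P_eps P * P_lam P) by nra. unfold Rdiv in *. nra. }
  exists (Rmin 0 (ln d / P_lam P)). intros t Ht.
  assert (Ht0: t <= 0) by (eapply Rle_trans; [exact Ht | apply Rmin_l]).
  assert (Ht1: t <= ln d / P_lam P) by (eapply Rle_trans; [exact Ht | apply Rmin_r]).
  assert (Hx: exp (P_lam P * t) <= d).
  { rewrite <- (exp_ln d) by auto. apply exp_le_mono.
    apply Rmult_le_compat_l with (r := P_lam P) in Ht1. 2: lra.
    replace (P_lam P * (ln d / P_lam P)) with (ln d) in Ht1 by (field; lra). lra. }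
  set (x := exp (P_lam P * t)). assert (Hx0: 0 < x) by apply exp_pos.
  assert (Hxd: x <= d) by exact Hx.
  assert (E2: exp (2 * P_lam P * t) = x * x) by (unfold x; rewrite <- exp_plus; f_equal; ring).
  assert (Eb: exp (P_beta P * t) <= exp (2 * P_lam P * t)) by (apply exp_le_mono; nra).
  split.
  - assert (Hr: Rabs (rl P t) <= A * (x * x)).
    { eapply Rle_trans. apply rl_bound; auto. unfold rho, A. rewrite <- E2. nra. }
    unfold W. fold x. pose proof (Rle_abs (- rl P t)). rewrite Rabs_Ropp in H.
    assert (HA: 0 <= A * x) by (unfold A; nra).
    assert (A * (x * x) <= A * d * x).
    { replace (A * (x * x)) with ((A * x) * x) by ring. replace (A * d * x) with ((A * x) * d) by ring.
      apply Rmult_le_compat_l; lra. }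
    assert (0 < x * (P_eps P - A * d)) by (apply Rmult_lt_0_compat; lra).
    nra.
  - pose proof (Q1_bound (P_lam P) (P_lm P) (P_beta P) (fh P (rl P)) M1 M2 t) as Hq.
    specialize (Hq (cont_fh P _ HP (rl_cont P HP)) (fh_bound P _ HP (rl_inS P HP)) Hlam Hlm Hbeta HM1 HM2 Ht0).
    fold K1 in Hq. rewrite E2 in Hq.
    assert (Hq2: Rabs (Q1 (P_lam P) (P_lm P) (fh P (rl P)) t) <= B * (x * x)).
    { unfold B. replace ((M1 + M2) * K1 * (x * x)) with ((M1 + M2) * (x * x) * (1 + - P_lm P / (2 * P_lam P - P_lm P)) / (P_lam P - P_lm P)).
      auto. unfold K1. field. lra. }
    unfold W1. fold x.
    pose proof (Rle_abs (- Q1 (P_lam P) (P_lm P) (fh P (rl P)) t)). rewrite Rabs_Ropp in H.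
    assert (HBx: 0 <= B * x) by nra.
    assert (B * (x * x) <= B * d * x).
    { replace (B * (x * x)) with ((B * x) * x) by ring. replace (B * d * x) with ((B * x) * d) by ring.
      apply Rmult_le_compat_l; lra. }
    assert (0 < x * (P_eps P * P_lam P - B * d)) by (apply Rmult_lt_0_compat; lra).
    nra.
Qed.

Lemma W_props P : good P -> P_mu P = P_m P * (1 - P_p P) ->
  forall t, 0 < W P t /\ 0 < W1 P t.
Proof.
  intros HP Hmu. destruct (near_minf P HP) as [T0 HT0].
  apply (pos_argument (W P) (W1 P) (GG P) (P_k P) T0); auto.
  intros; apply W_deriv; auto. intros; apply F_deriv; auto. intros; apply GG_pos; auto.
Qed.

Lemma W_tends_0 P : good P -> filterlim (W P) (Rbar_locally m_infty) (locally 0).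
Proof.
  intros HP. pose proof HP as HP'. gd HP'.
  apply (filterlim_locally (F := Rbar_locally m_infty) (W P) 0).
  intros eps. pose proof (cond_pos eps) as He.
  set (d := eps / (P_eps P + 2 * P_R P + 1)).
  assert (Hd: 0 < d) by (unfold d; apply Rdiv_lt_0_compat; lra).
  exists (Rmin 0 (ln d / P_lam P)). intros t Ht.
  assert (Ht0: t <= 0) by (left; eapply Rlt_le_trans; [exact Ht | apply Rmin_l]).
  assert (Ht1: t <= ln d / P_lam P) by (left; eapply Rlt_le_trans; [exact Ht | apply Rmin_r]).
  assert (Hx: exp (P_lam P * t) <= d).
  { rewrite <- (exp_ln d) by auto. apply exp_le_mono.
    apply Rmult_le_compat_l with (r := P_lam P) in Ht1. 2: lra.
    replace (P_lam P * (ln d / P_lam P)) with (ln d) in Ht1 by (field; lra). lra. }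
  set (x := exp (P_lam P * t)). assert (Hx0: 0 < x) by apply exp_pos.
  assert (Hxd: x <= d) by exact Hx.
  assert (Hx1: x <= 1) by (unfold x; rewrite <- exp_0; apply exp_le_mono; nra).
  assert (E2: exp (2 * P_lam P * t) = x * x) by (unfold x; rewrite <- exp_plus; f_equal; ring).
  assert (Eb: exp (P_beta P * t) <= exp (2 * P_lam P * t)) by (apply exp_le_mono; nra).
  assert (Hr: Rabs (rl P t) <= 2 * P_R P * x).
  { eapply Rle_trans. apply rl_bound; auto. unfold rho. rewrite E2 in *.
    assert (x * x <= x) by nra.
    assert (P_R P * (x * x + exp (P_beta P * t)) <= P_R P * (2 * x)) by (apply Rmult_le_compat_l; lra). lra. }
  unfold ball; simpl; unfold AbsRing_ball, abs, minus, plus, opp; simpl.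
  rewrite Ropp_0, Rplus_0_r. unfold W. fold x.
  eapply Rle_lt_trans. apply Rabs_triang. rewrite Rabs_mult, Rabs_pos_eq, (Rabs_pos_eq x) by lra.
  apply Rle_lt_trans with ((P_eps P + 2 * P_R P) * x). lra.
  apply Rle_lt_trans with ((P_eps P + 2 * P_R P) * d). apply Rmult_le_compat_l; lra.
  unfold d. replace ((P_eps P + 2 * P_R P) * (eps / (P_eps P + 2 * P_R P + 1))) with
    (eps * ((P_eps P + 2 * P_R P) / (P_eps P + 2 * P_R P + 1))) by (field; lra).
  assert ((P_eps P + 2 * P_R P) / (P_eps P + 2 * P_R P + 1) < 1) by (apply div_lt1; lra). nra.
Qed.

Lemma W_cont P t : good P -> continuous (W P) t.
Proof. intros HP. apply (ex_derive_continuous (K:=R_AbsRing) (V:=R_NormedModule)). eexists; apply W_deriv; auto. Qed.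
Lemma W1_cont P t : good P -> continuous (W1 P) t.
Proof. intros HP. apply (ex_derive_continuous (K:=R_AbsRing) (V:=R_NormedModule)). eexists; apply W1_deriv; auto. Qed.


Definition mkP (sigma p : R) : prm :=
  let a := (sigma + 2) / (1 - p) in
  let m := a * (1 - a) in
  let c := Rpower m (1 / (p - 1)) in
  let k := 2 * a - 1 in
  let mu := m * (1 - p) in
  let s := sqrt (k * k + 4 * mu) in
  let lam := (- k + s) / 2 in
  let lm := (- k - s) / 2 in
  let Lp := Rabs p * m in
  let C := Rabs p * (1 - p) * (m / c) in
  let d0 := lam * (2 * lam - lm) in
  let W0 := Rmin 1 (d0 / 2) / (C + 1) in
  mkprm lam lm k mu c p m (2 * lam + 4 * Lp + 2) (W0 / 2) (W0 / 4).

Lemma mkP_good sigma p : -2 < sigma -> p < -1 - sigma ->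
  good (mkP sigma p) /\ P_mu (mkP sigma p) = P_m (mkP sigma p) * (1 - P_p (mkP sigma p)).
Proof.
  intros Hs Hp.
  set (a := (sigma + 2) / (1 - p)).
  assert (Ha: 0 < a < 1).
  { unfold a. split. apply Rdiv_lt_0_compat; lra. apply div_lt1; lra. }
  set (m := a * (1 - a)). assert (Hm: 0 < m) by (unfold m; nra).
  set (c := Rpower m (1 / (p - 1))). assert (Hc: 0 < c) by apply Rpower_pos.
  assert (Hcm: Rpower c (p - 1) = m).
  { unfold c. rewrite Rpower_mult. replace (1 / (p - 1) * (p - 1)) with 1 by (field; lra). apply Rpower_1; auto. }
  set (k := 2 * a - 1). set (mu := m * (1 - p)). assert (Hmu: 0 < mu) by (unfold mu; nra).
  set (s := sqrt (k * k + 4 * mu)).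
  assert (Hs2: s * s = k * k + 4 * mu) by (unfold s; apply sqrt_sqrt; nra).
  assert (Hs0: 0 <= s) by apply sqrt_pos.
  assert (Hsk: k < s /\ - k < s) by (split; nra).
  set (lam := (- k + s) / 2). set (lm := (- k - s) / 2).
  assert (Hlam: 0 < lam) by (unfold lam; lra). assert (Hlm: lm < 0) by (unfold lm; lra).
  set (Lp := Rabs p * m). assert (HLp: 0 <= Lp) by (unfold Lp; pose proof (Rabs_pos p); nra).
  set (C := Rabs p * (1 - p) * (m / c)).
  assert (HC: 0 <= C). { unfold C. pose proof (Rabs_pos p). apply Rmult_le_pos. apply Rmult_le_pos; lra. apply Rdiv_le_0_compat; lra. }
  set (d0 := lam * (2 * lam - lm)). assert (Hd0: 0 < d0) by (unfold d0; nra).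
  set (W0 := Rmin 1 (d0 / 2) / (C + 1)).
  assert (HW0: 0 < W0) by (unfold W0; apply Rdiv_lt_0_compat; [apply Rmin_glb_lt; lra | lra]).
  assert (HCW: C * W0 <= Rmin 1 (d0 / 2)).
  { unfold W0. assert (0 < Rmin 1 (d0 / 2)) by (apply Rmin_glb_lt; lra).
    replace (C * (Rmin 1 (d0 / 2) / (C + 1))) with (Rmin 1 (d0 / 2) * (C / (C + 1))) by (field; lra).
    assert (C / (C + 1) < 1) by (apply div_lt1; lra). assert (0 <= C / (C + 1)) by (apply Rdiv_le_0_compat; lra). nra. }
  assert (HCW1: C * W0 <= 1) by (pose proof (Rmin_l 1 (d0 / 2)); lra).
  assert (HCW2: C * W0 <= d0 / 2) by (pose proof (Rmin_r 1 (d0 / 2)); lra).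
  split.
  2: reflexivity.
  unfold good, mkP. simpl. fold a m c k mu s lam lm Lp C d0 W0.
  unfold eta, D0, Db, Lip, C3. simpl. fold a m c k mu s lam lm Lp C d0 W0.
  replace (W0 / 2 + 2 * (W0 / 4)) with W0 by field.
  assert (Hbl: 1 <= 2 * lam + 4 * Lp + 2 - lam) by lra.
  assert (HDb: 2 * lam + 4 * Lp + 2 - lam <= (2 * lam + 4 * Lp + 2 - lam) * (2 * lam + 4 * Lp + 2 - lm)) by nra.
  repeat split; try lra.
  - replace (C * (W0 / 2 * (W0 / 2))) with (C * W0 * (W0 / 4)) by field.
    replace (d0 * (W0 / 4) / 2) with (d0 / 2 * (W0 / 4)) by field.
    apply Rmult_le_compat_r; lra.
  - unfold lam. replace ((- k + s) / 2 * ((- k + s) / 2) + k * ((- k + s) / 2) - mu) with ((s * s - k * k) / 4 - mu) by field.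
    rewrite Hs2. field.
  - unfold lm. replace ((- k - s) / 2 * ((- k - s) / 2) + k * ((- k - s) / 2) - mu) with ((s * s - k * k) / 4 - mu) by field.
    rewrite Hs2. field.
Qed.

Definition UU P a al x := (P_c P + W P (ln x + ln al)) * Rpower x a.
Definition UU1 P a al x := Rpower x a / x * (a * (P_c P + W P (ln x + ln al)) + W1 P (ln x + ln al)).
Definition UU2 P a al x := Rpower x a / (x * x) *
  (W2 P (ln x + ln al) + (2 * a - 1) * W1 P (ln x + ln al) + a * (a - 1) * (P_c P + W P (ln x + ln al))).

Lemma UU_deriv P a al x : good P -> 0 < x -> is_derive (UU P a al) x (UU1 P a al x).
Proof.
  intros HP Hx. unfold UU, UU1.
  pose proof (W_deriv P (ln x + ln al) HP) as H.
  assert (ex_derive (W P) (ln x + ln al)) by (eexists; eauto).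
  rewrite <- (is_derive_unique _ _ _ H). unfold Rpower.
  auto_derive. split; auto. change (fun x => W P x) with (W P). field. lra.
Qed.

Lemma UU1_deriv P a al x : good P -> 0 < x -> is_derive (UU1 P a al) x (UU2 P a al x).
Proof.
  intros HP Hx. unfold UU1, UU2.
  pose proof (W_deriv P (ln x + ln al) HP) as H.
  pose proof (W1_deriv P (ln x + ln al) HP) as H1.
  assert (ex_derive (W P) (ln x + ln al)) by (eexists; eauto).
  assert (ex_derive (W1 P) (ln x + ln al)) by (eexists; eauto).
  unfold Rpower.
  auto_derive. repeat split; auto. lra.
  change (fun x => W P x) with (W P); change (fun x => W1 P x) with (W1 P).
  rewrite (is_derive_unique _ _ _ H), (is_derive_unique _ _ _ H1).
  field. lra.
Qed.

Lemma locally_pos x : 0 < x -> locally x (fun y => 0 < y).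
Proof.
  intros Hx. exists (mkposreal x Hx). intros y Hy. unfold ball in Hy; simpl in Hy.
  unfold AbsRing_ball, abs, minus, plus, opp in Hy; simpl in Hy. apply Rabs_def2 in Hy. lra.
Qed.

Lemma Derive_UU P a al x : good P -> 0 < x -> Derive (UU P a al) x = UU1 P a al x.
Proof. intros. apply is_derive_unique, UU_deriv; auto. Qed.

Lemma Derive2_UU P a al x : good P -> 0 < x -> Derive (Derive (UU P a al)) x = UU2 P a al x.
Proof.
  intros HP Hx. rewrite (Derive_ext_loc _ (UU1 P a al)).
  apply is_derive_unique, UU1_deriv; auto.
  apply (filter_imp (fun y => 0 < y)). intros; apply Derive_UU; auto. apply locally_pos; auto.
Qed.

Lemma UU2_closed P a al x : good P -> P_mu P = P_m P * (1 - P_p P) -> P_k P = 2 * a - 1 ->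
  P_m P = a * (1 - a) -> 0 < x ->
  UU2 P a al x = - (Rpower x a / (x * x) * Rpower (P_c P + W P (ln x + ln al)) (P_p P)).
Proof.
  intros HP Hmu Hk Hma Hx. pose proof HP as HP'. gd HP'.
  destruct (W_props P HP Hmu (ln x + ln al)) as [Wp _].
  unfold UU2, W2, GG, hh, phi. rewrite Rabs_pos_eq by lra.
  assert (Ecp: Rpower (P_c P) (P_p P) = P_m P * P_c P).
  { replace (P_p P) with ((P_p P - 1) + 1) at 1 by ring. rewrite Rpower_plus, Rpower_1 by auto. rewrite Hm. ring. }
  rewrite Ecp, Hk, Hmu, Hma. ring.
Qed.

Lemma UU_ode P a sigma al x : good P -> P_mu P = P_m P * (1 - P_p P) -> P_k P = 2 * a - 1 ->
  P_m P = a * (1 - a) -> sigma + a * P_p P = a - 2 -> 0 < x ->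
  UU2 P a al x + Rpower x sigma * Rpower (UU P a al x) (P_p P) = 0.
Proof.
  intros HP Hmu Hk Hma Hs Hx. rewrite UU2_closed by auto.
  destruct (W_props P HP Hmu (ln x + ln al)) as [Wp _].
  pose proof HP as HP'. gd HP'.
  unfold UU. rewrite <- Rpower_mult_distr by (try apply Rpower_pos; lra).
  rewrite Rpower_mult.
  assert (E: Rpower x sigma * Rpower x (a * P_p P) = Rpower x a / (x * x)).
  { rewrite <- Rpower_plus. replace (sigma + a * P_p P) with (a + - 2) by lra.
    rewrite Rpower_plus. unfold Rpower at 2. replace (-2 * ln x) with (- (ln x + ln x)) by ring.
    rewrite exp_Ropp, exp_plus, exp_ln by auto. field. lra. }
  replace (Rpower x sigma * (Rpower (P_c P + W P (ln x + ln al)) (P_p P) * Rpower x (a * P_p P))) with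
    ((Rpower x sigma * Rpower x (a * P_p P)) * Rpower (P_c P + W P (ln x + ln al)) (P_p P)) by ring.
  rewrite E. ring.
Qed.

Lemma UU2_cont P a al x : good P -> P_mu P = P_m P * (1 - P_p P) -> P_k P = 2 * a - 1 ->
  P_m P = a * (1 - a) -> 0 < x -> continuous (Derive_n (UU P a al) 2) x.
Proof.
  intros HP Hmu Hk Hma Hx.
  apply continuous_ext_loc with (fun y => - (Rpower y a / (y * y) * Rpower (P_c P + W P (ln y + ln al)) (P_p P))).
  { apply (filter_imp (fun y => 0 < y)). intros y Hy. simpl. rewrite Derive2_UU, UU2_closed; auto.
    apply locally_pos; auto. }
  pose proof (W_props P HP Hmu (ln x + ln al)) as [Wp _].
  pose proof HP as HP'. gd HP'.
  apply (ex_derive_continuous (K:=R_AbsRing) (V:=R_NormedModule)).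
  assert (ex_derive (W P) (ln x + ln al)) by (eexists; apply W_deriv; auto).
  unfold Rpower. auto_derive. repeat split; auto. all: try lra. apply Rmult_integral_contrapositive; split; lra.
Qed.

Lemma shift_minf L : filterlim (fun t => t + L) (Rbar_locally m_infty) (Rbar_locally m_infty).
Proof.
  intros Q [M HM]. exists (M - L). intros x Hx. apply HM. lra.
Qed.

Theorem theorem5p1 (sigma p : R) (hsigma : -2 < sigma) (hp : p < -1 - sigma) :
  exists U : R -> R -> R,
    (forall alpha, 0 < alpha ->
       (forall x, 0 < x -> 0 < U alpha x) /\
       C2_on_pos (U alpha) /\
       (forall x, 0 < x ->
          Derive_n (U alpha) 2 x + Rpower x sigma * Rpower (U alpha x) p = 0) /\
       filterlim (fun x => U alpha x / u_a sigma p x) (at_right 0) (locally 1)) /\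
    (forall alpha1 alpha2, alpha1 > alpha2 -> alpha2 > 0 ->
       forall x, 0 < x ->
         U alpha1 x > U alpha2 x /\ U alpha2 x > u_a sigma p x).
Proof.
  destruct (mkP_good sigma p hsigma hp) as [HP Hmu].
  set (P := mkP sigma p) in *. set (a := exp_a sigma p).
  assert (Hk: P_k P = 2 * a - 1) by reflexivity.
  assert (Hma: P_m P = a * (1 - a)) by reflexivity.
  assert (Hpp: P_p P = p) by reflexivity.
  assert (Hca: P_c P = c_a sigma p) by reflexivity.
  assert (Hsa: sigma + a * P_p P = a - 2).
  { rewrite Hpp. unfold a, exp_a. field. lra. }
  assert (Hua: forall x, u_a sigma p x = P_c P * Rpower x a) by (intros; unfold u_a; rewrite Hca; reflexivity).
  pose proof HP as HP'. gd HP'.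
  assert (Hwp := W_props P HP Hmu).
  exists (UU P a). split.
  - intros al Hal. split; [|split; [|split]].
    + intros x Hx. unfold UU. apply Rmult_lt_0_compat. destruct (Hwp (ln x + ln al)); lra. apply Rpower_pos.
    + intros x Hx. split; [|split].
      * eexists; apply UU_deriv; auto.
      * exists (UU2 P a al x). apply is_derive_ext_loc with (UU1 P a al).
        apply (filter_imp (fun y => 0 < y)). intros y Hy. symmetry; apply Derive_UU; auto. apply locally_pos; auto.
        apply UU1_deriv; auto.
      * apply UU2_cont; auto.
    + intros x Hx. change (Derive_n (UU P a al) 2 x) with (Derive (Derive (UU P a al)) x).
      rewrite Derive2_UU by auto. rewrite <- Hpp. apply UU_ode; auto.
    + apply filterlim_ext_loc with (fun x => (P_c P + W P (ln x + ln al)) / P_c P).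
      { unfold at_right, within. apply filter_forall. intros x Hx.
        rewrite Hua. unfold UU. field. split. pose proof (Rpower_pos x a); lra. lra. }
      apply (filterlim_comp _ _ _ (fun x => W P (ln x + ln al)) (fun y => (P_c P + y) / P_c P) (at_right 0) (locally 0) (locally 1)).
      apply (filterlim_comp _ _ _ (fun x => ln x + ln al) (W P) (at_right 0) (Rbar_locally m_infty) (locally 0)).
      apply (filterlim_comp _ _ _ ln (fun t => t + ln al) (at_right 0) (Rbar_locally m_infty) (Rbar_locally m_infty)).
      apply is_lim_ln_0. apply shift_minf. apply W_tends_0; auto.
      replace 1 with ((P_c P + 0) / P_c P) by (field; lra).
      apply (ex_derive_continuous (K:=R_AbsRing) (V:=R_NormedModule) (fun y => (P_c P + y) / P_c P)).
      auto_derive. lra.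
  - intros a1 a2 H12 H2 x Hx. unfold UU. rewrite Hua.
    pose proof (Rpower_pos x a).
    assert (Hl: ln x + ln a2 < ln x + ln a1) by (apply Rplus_lt_compat_l, ln_increasing; lra).
    pose proof (strict_incr (W P) (W1 P) (fun t => W_deriv P t HP) (fun t => proj2 (Hwp t)) _ _ Hl).
    destruct (Hwp (ln x + ln a2)).
    split; apply Rmult_lt_compat_r; lra.
Qed.
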